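(* The commutator subgroup $F_\tau'=[F_\tau,F_\tau]$ is a simple group.
   Context: Let $\tau=(\sqrt5-1)/2$. $F_\tau$ is the group, under composition, of orientation-preserving homeomorphisms of $[0,1]$ that are piecewise linear with finitely many breakpoints, all breakpoints in $\mathbb{Z}[\tau]=\{a+b\tau:a,b\in\mathbb{Z}\}$ and all slopes integer powers of $\tau$. *)

(* Defs.v *)
From Stdlib Require Import Reals ZArith.
Open Scope R_scope.

Definition tau : R := (sqrt 5 - 1) / 2.

Definition in_Ztau (x : R) : Prop :=
  exists a b : Z, x = IZR a + IZR b * tau.

(* Elements of F_tau, encoded as functions R -> R that are the identity
   outside [0,1] (so that equality and composition are the usual ones).
   On [0,1]: there is a finite subdivision 0 = p 0 < p 1 < ... < p n = 1
   with all p i in Z[tau], on each [p i, p (i+1)] f is affine with slope an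
   integer power of tau, and f 0 = 0, f 1 = 1.  Such an f is continuous,
   strictly increasing, hence an orientation-preserving PL homeomorphism
   of [0,1]; conversely every element of F_tau arises this way. *)
Definition in_Ftau (f : R -> R) : Prop :=
  (forall x, (x < 0 \/ 1 < x) -> f x = x) /\
  f 0 = 0 /\ f 1 = 1 /\
  exists (n : nat) (p : nat -> R),
    p 0%nat = 0 /\ p n = 1 /\
    (forall i, (i < n)%nat -> p i < p (S i)) /\
    (forall i, (i <= n)%nat -> in_Ztau (p i)) /\
    (forall i, (i < n)%nat ->
       exists k : Z, forall x, p i <= x <= p (S i) ->
         f x = f (p i) + powerRZ tau k * (x - p i)).

Definition idR : R -> R := fun x => x.

Definition comp (f g : R -> R) : R -> R := fun x => f (g x).

Definition inverse_of (g' g : R -> R) : Prop :=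
  comp g g' = idR /\ comp g' g = idR.

Definition is_commutator (c : R -> R) : Prop :=
  exists f g f' g', in_Ftau f /\ in_Ftau g /\
    inverse_of f' f /\ inverse_of g' g /\
    c = comp f' (comp g' (comp f g)).

(* The commutator subgroup F_tau' : the subgroup generated by commutators,
   i.e. the finite products of commutators (the inverse of a commutator is
   again a commutator). *)
Inductive in_Ftau' : (R -> R) -> Prop :=
  | Ftau'_id : in_Ftau' idR
  | Ftau'_mul : forall h c, in_Ftau' h -> is_commutator c ->
      in_Ftau' (comp h c).

Definition normal_subgroup_of_Ftau' (N : (R -> R) -> Prop) : Prop :=
  (forall h, N h -> in_Ftau' h) /\
  N idR /\
  (forall h k, N h -> N k -> N (comp h k)) /\
  (forall h h', N h -> inverse_of h' h -> N h') /\
  (forall h g g', N h -> in_Ftau' g -> inverse_of g' g ->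
     N (comp g' (comp h g))).

Definition Ftau'_simple : Prop :=
  (exists h, in_Ftau' h /\ h <> idR) /\
  (forall N, normal_subgroup_of_Ftau' N ->
     (forall h, N h -> h = idR) \/ (forall h, in_Ftau' h -> N h)).

(* Main.v *)
Require Import Defs.
From Stdlib Require Import Reals ZArith.
From Stdlib Require Import Lra Lia List Classical FunctionalExtensionality.
Open Scope R_scope.
Local Notation comp := Defs.comp (only parsing).

Lemma sqrt5_sq : sqrt 5 * sqrt 5 = 5.
Proof. apply sqrt_sqrt. lra. Qed.

Lemma tau_eq : tau * tau = 1 - tau.
Proof. unfold tau. pose proof sqrt5_sq. lra. Qed.

Lemma tau_pos : 0 < tau.
Proof. unfold tau. pose proof sqrt5_sq. pose proof (sqrt_pos 5). nra. Qed.

Lemma tau_lt1 : tau < 1.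
Proof. unfold tau. pose proof sqrt5_sq. pose proof (sqrt_pos 5). nra. Qed.

Lemma tau_gt : 0.6 < tau.
Proof. pose proof tau_eq. pose proof tau_pos. pose proof tau_lt1. nra. Qed.
Lemma tau_lt : tau < 0.62.
Proof. pose proof tau_eq. pose proof tau_pos. pose proof tau_lt1. nra. Qed.

Lemma tau_neq0 : tau <> 0.
Proof. pose proof tau_pos; lra. Qed.

Lemma tau_inv : / tau = 1 + tau.
Proof. pose proof tau_eq. pose proof tau_pos. field_simplify_eq; [lra | lra]. Qed.

Notation Zt := in_Ztau.
Definition pw (k : Z) : R := powerRZ tau k.

Lemma Zt_IZR : forall a, Zt (IZR a).
Proof. intros a. exists a, 0%Z. lra. Qed.
Lemma Zt_0 : Zt 0. Proof. exists 0%Z, 0%Z. lra. Qed.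
Lemma Zt_1 : Zt 1. Proof. exists 1%Z, 0%Z. lra. Qed.
Lemma Zt_tau : Zt tau. Proof. exists 0%Z, 1%Z. lra. Qed.
Lemma Zt_add : forall x y, Zt x -> Zt y -> Zt (x + y).
Proof. intros x y [a [b Hx]] [c [d Hy]]. exists (a+c)%Z, (b+d)%Z.
  rewrite !plus_IZR. subst. lra. Qed.
Lemma Zt_opp : forall x, Zt x -> Zt (- x).
Proof. intros x [a [b Hx]]. exists (-a)%Z, (-b)%Z. rewrite !opp_IZR. subst. lra. Qed.
Lemma Zt_sub : forall x y, Zt x -> Zt y -> Zt (x - y).
Proof. intros. unfold Rminus. apply Zt_add; auto. apply Zt_opp; auto. Qed.
Lemma Zt_mul : forall x y, Zt x -> Zt y -> Zt (x * y).
Proof. intros x y [a [b Hx]] [c [d Hy]]. exists (a*c + b*d)%Z, (a*d+b*c-b*d)%Z.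
  rewrite minus_IZR, !plus_IZR, !mult_IZR. subst. pose proof tau_eq.
  assert (IZR b * IZR d * (tau*tau) = IZR b * IZR d * (1 - tau)) by (rewrite H; ring).
  lra. Qed.
Lemma Zt_pow : forall x n, Zt x -> Zt (x ^ n).
Proof. intros x n H. induction n; simpl. apply Zt_1. apply Zt_mul; auto. Qed.
Lemma Zt_invtau : Zt (/ tau).
Proof. rewrite tau_inv. apply Zt_add. apply Zt_1. apply Zt_tau. Qed.
Lemma Zt_pw : forall k, Zt (pw k).
Proof. intros k. unfold pw. destruct k; simpl.
  - apply Zt_1.
  - apply Zt_pow. apply Zt_tau.
  - rewrite <- pow_inv. apply Zt_pow. apply Zt_invtau. Qed.

Lemma pw_pos : forall k, 0 < pw k.
Proof. intros. unfold pw. apply powerRZ_lt. apply tau_pos. Qed.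
Lemma pw_add : forall k m, pw (k + m) = pw k * pw m.
Proof. intros. unfold pw. apply powerRZ_add. apply tau_neq0. Qed.
Lemma pw_0 : pw 0 = 1. Proof. reflexivity. Qed.
Lemma pw_1 : pw 1 = tau. Proof. unfold pw. simpl. ring. Qed.
Lemma pw_opp : forall k, pw (- k) = / pw k.
Proof. intros. unfold pw. apply powerRZ_neg'. Qed.
Lemma pw_inv_l : forall k, pw (- k) * pw k = 1.
Proof. intros. rewrite pw_opp. field. pose proof (pw_pos k). lra. Qed.
Lemma pw_split : forall k, pw k = pw (k+1) + pw (k+2).
Proof. intros. rewrite !pw_add. replace (pw 2) with (tau*tau).
  rewrite pw_1. pose proof tau_eq. 
  assert (pw k * (tau*tau) = pw k * (1 - tau)) by (rewrite H; ring). lra.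
  unfold pw. simpl. ring. Qed.

Lemma Zt_dense : forall x y, x < y -> exists z, Zt z /\ x < z < y.
Proof.
  intros x y Hxy.
  assert (Ht : Rabs tau < 1) by (rewrite Rabs_right; pose proof tau_lt1; pose proof tau_pos; lra).
  destruct (pow_lt_1_zero tau Ht (y - x)) as [N HN]; [lra|].
  specialize (HN N (le_n N)).
  assert (He : 0 < tau ^ N) by (apply pow_lt; apply tau_pos).
  rewrite Rabs_right in HN by lra.
  set (e := tau ^ N) in *.
  destruct (archimed (x / e)) as [H1 H2].
  exists (IZR (up (x/e)) * e). split.
  - apply Zt_mul. apply Zt_IZR. apply Zt_pow. apply Zt_tau.
  - split.
    + apply Rmult_gt_compat_r with (r := e) in H1; [|lra].
      unfold Rdiv in H1. rewrite Rmult_assoc, Rinv_l in H1 by lra. lra.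
    + assert (IZR (up (x / e)) <= x/e + 1) by lra.
      apply Rmult_le_compat_r with (r := e) in H; [|lra].
      unfold Rdiv in H. rewrite Rmult_plus_distr_r, Rmult_assoc, Rinv_l in H by lra. lra.
Qed.

Fixpoint sumt (E : list Z) : R :=
  match E with nil => 0 | e :: r => pw e + sumt r end.

Lemma sumt_app : forall E F, sumt (E ++ F) = sumt E + sumt F.
Proof. induction E; intros; simpl. lra. rewrite IHE. lra. Qed.
Lemma sumt_repeat : forall e k, sumt (repeat e k) = INR k * pw e.
Proof. induction k; simpl. lra. rewrite IHk. destruct k; simpl; lra. Qed.

Lemma tau_pow_le1 : forall n, tau ^ n <= 1.
Proof. induction n; simpl. lra. pose proof tau_pos. pose proof tau_lt1.
  assert (0 <= tau ^ n) by (apply pow_le; lra). nra. Qed.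

Lemma rep_pos : forall x, Zt x -> 0 < x -> exists E, E <> nil /\ x = sumt E.
Proof.
  intros x [a [b Hx]] Hpos.
  set (phi := 1 + tau).
  set (step := fun p : Z * Z => ((fst p + snd p)%Z, fst p)).
  set (AB := fun n => Nat.iter n step (a, b)).
  set (xb := IZR a - IZR b * phi).
  pose proof tau_eq as Te. pose proof tau_pos. pose proof tau_lt1.
  assert (Inv : forall n, IZR (fst (AB n)) + IZR (snd (AB n)) * tau = x * phi ^ n /\
                          IZR (fst (AB n)) - IZR (snd (AB n)) * phi = xb * (- tau) ^ n).
  { induction n.
    - simpl. unfold xb. split; lra.
    - destruct IHn as [I1 I2]. unfold AB in *. simpl Nat.iter. 
      destruct (Nat.iter n step (a, b)) as [A B]. simpl in *.
      rewrite plus_IZR. unfold phi in *. split.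
      + replace (x * ((1 + tau) * (1 + tau) ^ n)) with ((1 + tau) * (x * (1 + tau) ^ n)) by ring.
        rewrite <- I1.
        assert (IZR B * (tau * tau) = IZR B * (1 - tau)) by (rewrite Te; ring). lra.
      + replace (xb * (- tau * (- tau) ^ n)) with (- tau * (xb * (- tau) ^ n)) by ring.
        rewrite <- I2.
        assert (IZR B * (tau * tau) = IZR B * (1 - tau)) by (rewrite Te; ring). lra. }
  assert (Ht : Rabs tau < 1) by (rewrite Rabs_right; lra).
  destruct (pow_lt_1_zero tau Ht (x / (Rabs xb + 1))) as [N HN].
  { apply Rdiv_lt_0_compat; [lra|]. pose proof (Rabs_pos xb); lra. }
  specialize (HN N (le_n N)).
  assert (HtN : 0 < tau ^ N) by (apply pow_lt; lra).
  rewrite Rabs_right in HN by lra.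
  assert (Hpt : phi ^ N * tau ^ N = 1).
  { rewrite <- Rpow_mult_distr. unfold phi. replace ((1 + tau) * tau) with 1 by lra. apply pow1. }
  assert (Hbig : x * phi ^ N > Rabs xb + 1).
  { assert (Hr : 0 < Rabs xb + 1) by (pose proof (Rabs_pos xb); lra).
    apply (Rmult_lt_compat_r (Rabs xb + 1)) in HN; [|lra].
    unfold Rdiv in HN. rewrite Rmult_assoc, Rinv_l in HN by lra.
    assert (x * phi ^ N * tau ^ N = x) by (rewrite Rmult_assoc, Hpt; ring).
    assert (Hp : 0 < phi ^ N) by (apply pow_lt; unfold phi; lra).
    nra. }
  destruct (Inv N) as [I1 I2].
  destruct (AB N) as [A B] eqn:EAB. simpl in I1, I2.
  set (t := (- tau) ^ N) in *.
  assert (Htb : Rabs t <= 1).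
  { unfold t. rewrite <- RPow_abs. rewrite Rabs_Ropp, Rabs_right by lra. apply tau_pow_le1. }
  assert (Hxt : Rabs (xb * t) <= Rabs xb).
  { rewrite Rabs_mult. pose proof (Rabs_pos xb). pose proof (Rabs_pos t). nra. }
  assert (Hb1 : xb * t <= Rabs xb) by (pose proof (Rle_abs (xb*t)); lra).
  assert (Hb2 : - Rabs xb <= xb * t) by (pose proof (Rle_abs (-(xb*t))); rewrite Rabs_Ropp in H1; lra).
  assert (HB : (0 < B)%Z).
  { apply lt_IZR. unfold phi in I2. nra. }
  assert (HA : (0 <= A)%Z).
  { apply le_IZR. unfold phi in I2. pose proof (Rabs_pos xb). nra. }
  exists (repeat (Z.of_nat N) (Z.to_nat A) ++ repeat (Z.of_nat N + 1)%Z (Z.to_nat B)).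
  split.
  - destruct (Z.to_nat B) eqn:EB; [lia|]. simpl. intro Hc. apply app_eq_nil in Hc. destruct Hc; discriminate.
  - rewrite sumt_app, !sumt_repeat, !INR_IZR_INZ, !Z2Nat.id by lia.
    rewrite pw_add, pw_1. unfold pw. rewrite <- pow_powerRZ.
    assert (x = (x * phi ^ N) * tau ^ N) by (rewrite Rmult_assoc, Hpt; ring).
    rewrite H1, <- I1. ring.
Qed.

Lemma grow : forall k E, E <> nil -> exists E', length E' = (length E + k)%nat /\ sumt E' = sumt E.
Proof.
  induction k; intros E HE.
  - exists E. split; [lia | reflexivity].
  - destruct (IHk E HE) as [E' [H1 H2]].
    destruct E' as [|e r]. { destruct E; simpl in H1; [congruence | lia]. }
    exists ((e+1)%Z :: (e+2)%Z :: r). split. simpl in *. lia.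
    rewrite <- H2. simpl. rewrite (pw_split e). lra.
Qed.

Definition noL (L : list R) (x y : R) := forall l, In l L -> ~ (x < l < y).

Definition PLprops (a b : R) (f : R -> R) (L : list R) : Prop :=
  (forall l, In l L -> Zt l /\ a <= l <= b) /\ In a L /\ In b L /\
  (forall x y, a <= x -> x < y -> y <= b -> noL L x y ->
      exists k, forall z, x <= z <= y -> f z = f x + pw k * (z - x)) /\
  (forall z, a <= z <= b -> Zt z -> Zt (f z)).

Definition PLmap a b c d f := a < b /\ f a = c /\ f b = d /\ exists L, PLprops a b f L.

Lemma Lmax (P : R -> Prop) L : (exists l, In l L /\ P l) ->
  exists m, In m L /\ P m /\ forall l, In l L -> P l -> l <= m.
Proof.
  induction L as [|h t IH]; intros [l [Hl Pl]]. destruct Hl.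
  destruct (classic (exists l, In l t /\ P l)) as [Ht|Ht].
  - destruct (IH Ht) as [m [Hm1 [Hm2 Hm3]]].
    destruct (classic (P h)) as [Ph|Ph].
    + destruct (Rle_dec h m).
      * exists m. split; [right; auto|]. split; auto. intros l' [<-|Hl'] Pl'; auto.
      * exists h. split; [left; auto|]. split; auto. intros l' [<-|Hl'] Pl'. lra.
        specialize (Hm3 l' Hl' Pl'). lra.
    + exists m. split; [right; auto|]. split; auto. intros l' [<-|Hl'] Pl'; [contradiction|auto].
  - assert (P h). { destruct Hl as [<-|Hl]; auto. exfalso; apply Ht; eauto. }
    exists h. split; [left; auto|]. split; auto. intros l' [<-|Hl'] Pl'. lra.
    exfalso; apply Ht; eauto.
Qed.

Lemma Lmin (P : R -> Prop) L : (exists l, In l L /\ P l) ->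
  exists m, In m L /\ P m /\ forall l, In l L -> P l -> m <= l.
Proof.
  induction L as [|h t IH]; intros [l [Hl Pl]]. destruct Hl.
  destruct (classic (exists l, In l t /\ P l)) as [Ht|Ht].
  - destruct (IH Ht) as [m [Hm1 [Hm2 Hm3]]].
    destruct (classic (P h)) as [Ph|Ph].
    + destruct (Rle_dec m h).
      * exists m. split; [right; auto|]. split; auto. intros l' [<-|Hl'] Pl'; auto.
      * exists h. split; [left; auto|]. split; auto. intros l' [<-|Hl'] Pl'. lra.
        specialize (Hm3 l' Hl' Pl'). lra.
    + exists m. split; [right; auto|]. split; auto. intros l' [<-|Hl'] Pl'; [contradiction|auto].
  - assert (P h). { destruct Hl as [<-|Hl]; auto. exfalso; apply Ht; eauto. }
    exists h. split; [left; auto|]. split; auto. intros l' [<-|Hl'] Pl'. lra.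
    exfalso; apply Ht; eauto.
Qed.

Lemma piece a b f L x : PLprops a b f L -> a <= x < b ->
  exists l1 l2, In l1 L /\ In l2 L /\ l1 <= x < l2 /\ noL L l1 l2.
Proof.
  intros [HL [Ha [Hb _]]] Hx.
  destruct (Lmax (fun l => l <= x) L) as [m1 [Hm1 [Pm1 Mm1]]]. { exists a. split; auto; lra. }
  destruct (Lmin (fun l => x < l) L) as [m2 [Hm2 [Pm2 Mm2]]]. { exists b. split; auto; lra. }
  exists m1, m2. split; auto. split; auto. split. simpl in *. lra.
  intros l Hl [H1 H2]. destruct (Rle_dec l x).
  - specialize (Mm1 l Hl r). lra.
  - specialize (Mm2 l Hl ltac:(simpl; lra)). lra.
Qed.

Lemma piece_aff a b f L x : PLprops a b f L -> a <= x < b ->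
  exists l1 l2 k, a <= l1 <= x /\ x < l2 <= b /\ Zt l1 /\ Zt l2 /\ noL L l1 l2 /\
     forall z, l1 <= z <= l2 -> f z = f l1 + pw k * (z - l1).
Proof.
  intros HP Hx. destruct (piece a b f L x HP Hx) as [l1 [l2 [H1 [H2 [H3 H4]]]]].
  destruct HP as [HL [Ha [Hb [Hpc Hz]]]].
  destruct (HL l1 H1) as [Z1 B1]. destruct (HL l2 H2) as [Z2 B2].
  destruct (Hpc l1 l2) as [k Hk]; try lra; auto.
  exists l1, l2, k. repeat split; auto; lra.
Qed.

Definition cntlt (L : list R) (y : R) : nat :=
  length (filter (fun l => if Rlt_dec l y then true else false) L).

Lemma cntlt_le : forall L m y, m <= y -> (cntlt L m <= cntlt L y)%nat.
Proof. induction L; intros; unfold cntlt in *; simpl. lia.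
  specialize (IHL m y H).
  destruct (Rlt_dec a m); destruct (Rlt_dec a y); simpl; try lia. lra. Qed.

Lemma cntlt_lt : forall L m y, m < y -> In m L -> (cntlt L m < cntlt L y)%nat.
Proof. induction L; intros m y H HI; unfold cntlt in *; simpl. destruct HI.
  destruct HI as [<-|HI].
  - pose proof (cntlt_le L a y ltac:(lra)). unfold cntlt in H0.
    destruct (Rlt_dec a a); [lra|]. destruct (Rlt_dec a y); [|lra]. simpl. lia.
  - specialize (IHL m y H HI).
    destruct (Rlt_dec a m); destruct (Rlt_dec a y); simpl; try lia. lra. Qed.

Definition cntgt (L : list R) (y : R) : nat :=
  length (filter (fun l => if Rlt_dec y l then true else false) L).

Lemma cntgt_le : forall L m y, y <= m -> (cntgt L m <= cntgt L y)%nat.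
Proof. induction L; intros; unfold cntgt in *; simpl. lia.
  specialize (IHL m y H).
  destruct (Rlt_dec m a); destruct (Rlt_dec y a); simpl; try lia. lra. Qed.

Lemma cntgt_lt : forall L m y, y < m -> In m L -> (cntgt L m < cntgt L y)%nat.
Proof. induction L; intros m y H HI; unfold cntgt in *; simpl. destruct HI.
  destruct HI as [<-|HI].
  - pose proof (cntgt_le L a y ltac:(lra)). unfold cntgt in H0.
    destruct (Rlt_dec a a); [lra|]. destruct (Rlt_dec y a); [|lra]. simpl. lia.
  - specialize (IHL m y H HI).
    destruct (Rlt_dec m a); destruct (Rlt_dec y a); simpl; try lia. lra. Qed.

Lemma PL_mono a b f L : PLprops a b f L -> forall x y, a <= x -> x < y -> y <= b -> f x < f y.
Proof.
  intros HP.
  assert (forall n y, cntlt L y = n -> forall x, a <= x -> x < y -> y <= b -> f x < f y).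
  { intros n. induction n as [n IH] using lt_wf_ind. intros y Hn x Hax Hxy Hyb.
    pose proof HP as [HL [Ha [Hb [Hpc Hz]]]].
    destruct (Lmax (fun l => l < y) L) as [m [Hm [Pm Mm]]]. { exists a. split; auto; lra. }
    simpl in Pm.
    assert (Ham : a <= m) by (apply Mm; auto; lra).
    assert (HnL : noL L m y). { intros l Hl [H1 H2]. specialize (Mm l Hl H2). lra. }
    destruct (Hpc m y) as [k Hk]; auto; try lra.
    pose proof (pw_pos k).
    assert (Hmy : f m < f y) by (rewrite (Hk y) by lra; nra).
    destruct (Rle_dec m x).
    - rewrite (Hk x) by lra. rewrite (Hk y) by lra. nra.
    - assert (f x < f m).
      { apply (IH (cntlt L m)); auto; try lra. subst n. apply cntlt_lt; auto. }
      lra. }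
  intros x y Hx Hxy Hy. eapply H; eauto.
Qed.

Definition Fm (f : R -> R) := (forall x, x < 0 \/ 1 < x -> f x = x) /\ PLmap 0 1 0 1 f.

Lemma inv_l f' f : inverse_of f' f -> forall x, f' (f x) = x.
Proof. intros [_ H] x. exact (equal_f H x). Qed.
Lemma inv_r f' f : inverse_of f' f -> forall x, f (f' x) = x.
Proof. intros [H _] x. exact (equal_f H x). Qed.
Lemma inv_sym f' f : inverse_of f' f -> inverse_of f f'.
Proof. intros [H1 H2]. split; auto. Qed.
Lemma inv_intro f' f : (forall x, f' (f x) = x) -> (forall x, f (f' x) = x) -> inverse_of f' f.
Proof. intros H1 H2. split; apply functional_extensionality; intro x; unfold comp, idR; [apply H2 | apply H1]. Qed.
Lemma inv_uniq f1 f2 f : inverse_of f1 f -> inverse_of f2 f -> f1 = f2.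
Proof. intros H1 H2. apply functional_extensionality. intro x.
  rewrite <- (inv_r _ _ H2 x) at 1. rewrite (inv_l _ _ H1). reflexivity. Qed.

Lemma Fm_mono01 f : Fm f -> forall x y, 0 <= x -> x < y -> y <= 1 -> f x < f y.
Proof. intros [_ [_ [_ [_ [L HP]]]]]. eapply PL_mono; eauto. Qed.

Lemma Fm_01 f : Fm f -> forall x, 0 <= x <= 1 -> 0 <= f x <= 1.
Proof. intros HF x Hx. pose proof HF as [_ [_ [H0 [H1 _]]]].
  destruct (Req_dec x 0). subst; lra. destruct (Req_dec x 1). subst; lra.
  pose proof (Fm_mono01 f HF 0 x). pose proof (Fm_mono01 f HF x 1). lra. Qed.

Lemma Fm_mono f : Fm f -> forall x y, x < y -> f x < f y.
Proof. intros HF x y Hxy. pose proof HF as [Ho [_ [H0 [H1 _]]]].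
  destruct (Rlt_dec x 0).
  - rewrite (Ho x) by lra. destruct (Rlt_dec y 0). rewrite (Ho y) by lra; lra.
    destruct (Rle_dec y 1). pose proof (Fm_01 f HF y). lra. rewrite (Ho y) by lra; lra.
  - destruct (Rle_dec x 1).
    + destruct (Rle_dec y 1). apply Fm_mono01; auto; lra.
      rewrite (Ho y) by lra. pose proof (Fm_01 f HF x). lra.
    + rewrite (Ho x), (Ho y) by lra. lra.
Qed.

Lemma Fm_le f : Fm f -> forall x y, x <= y -> f x <= f y.
Proof. intros HF x y H. destruct (Req_dec x y). subst; lra. left; apply Fm_mono; auto; lra. Qed.

Lemma Fm_lt_iff f : Fm f -> forall x y, f x < f y -> x < y.
Proof. intros HF x y H. destruct (Rlt_dec x y); auto. pose proof (Fm_le f HF y x). lra. Qed.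

Lemma Fm_inj f : Fm f -> forall x y, f x = f y -> x = y.
Proof. intros HF x y H. destruct (Rtotal_order x y) as [h|[h|h]]; auto;
  apply (Fm_mono f HF) in h; lra. Qed.

Lemma Fm_Zt f : Fm f -> forall z, Zt z -> Zt (f z).
Proof. intros [Ho [_ [_ [_ [L [_ [_ [_ [_ HZ]]]]]]]]] z Hz.
  destruct (Rlt_dec z 0). rewrite Ho; auto. destruct (Rlt_dec 1 z). rewrite Ho; auto.
  apply HZ; auto. lra. Qed.

Lemma inv_mono f f' : Fm f -> inverse_of f' f -> forall u v, u <= v -> f' u <= f' v.
Proof. intros HF HI u v H. destruct (Rle_dec (f' u) (f' v)); auto.
  assert (f (f' v) < f (f' u)) by (apply Fm_mono; auto; lra).
  rewrite !(inv_r _ _ HI) in H0. lra. Qed.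

Lemma Fm_inv f f' : Fm f -> inverse_of f' f -> Fm f'.
Proof.
  intros HF HI. pose proof HF as [Ho [_ [H0 [H1 [L HP]]]]].
  pose proof HP as [HL [Ha [Hb [Hpc HZ]]]].
  assert (M : forall u v, u <= v -> f' u <= f' v) by (apply (inv_mono f); auto).
  assert (E0 : f' 0 = 0) by (rewrite <- H0 at 1; apply (inv_l _ _ HI)).
  assert (E1 : f' 1 = 1) by (rewrite <- H1 at 1; apply (inv_l _ _ HI)).
  split.
  { intros x Hx. rewrite <- (Ho x Hx) at 1. apply (inv_l _ _ HI). }
  split; [lra|]. split; auto. split; auto.
  exists (map f L). split; [|split; [|split; [|split]]].
  - intros l' Hl'. apply in_map_iff in Hl'. destruct Hl' as [l [<- Hl]].
    destruct (HL l Hl). split. apply Fm_Zt; auto. apply Fm_01; auto.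
  - apply in_map_iff. exists 0. auto.
  - apply in_map_iff. exists 1. auto.
  - intros x y Hx Hxy Hy HnL.
    assert (Hx'y' : f' x < f' y).
    { destruct (Rlt_dec (f' x) (f' y)); auto. assert (f (f' y) <= f (f' x)) by (apply Fm_le; auto; lra).
      rewrite !(inv_r _ _ HI) in H. lra. }
    pose proof (M 0 x Hx). pose proof (M y 1 Hy).
    destruct (Hpc (f' x) (f' y)) as [k Hk]; try lra.
    { intros l Hl [Hl1 Hl2]. apply (HnL (f l)). apply in_map_iff; eauto.
      apply (Fm_mono f HF) in Hl1. apply (Fm_mono f HF) in Hl2.
      rewrite !(inv_r _ _ HI) in Hl1, Hl2. lra. }
    exists (- k)%Z. intros w Hw.
    assert (Hw' : f' x <= f' w <= f' y) by (split; apply M; lra).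
    specialize (Hk (f' w) Hw'). rewrite !(inv_r _ _ HI) in Hk.
    pose proof (pw_inv_l k). pose proof (pw_pos k).
    assert (f' w - f' x = pw (-k) * (w - x)).
    { assert (Hwx : w - x = pw k * (f' w - f' x)) by lra. rewrite Hwx.
      rewrite <- Rmult_assoc, H3. ring. }
    lra.
  - intros z Hz HZz. set (x := f' z).
    assert (Hx : 0 <= x <= 1) by (unfold x; split; [rewrite <- E0; apply M | rewrite <- E1; apply M]; lra).
    destruct (Req_dec x 1). rewrite H. apply Zt_1.
    destruct (piece_aff 0 1 f L x HP ltac:(lra)) as [l1 [l2 [k [B1 [B2 [Z1 [Z2 [_ Hk]]]]]]]].
    specialize (Hk x ltac:(lra)). unfold x in Hk. rewrite (inv_r _ _ HI) in Hk.
    assert (x = l1 + pw (-k) * (z - f l1)).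
    { assert (Hzz : z - f l1 = pw k * (x - l1)) by (unfold x; lra). rewrite Hzz.
      rewrite <- Rmult_assoc, pw_inv_l. ring. }
    rewrite H2. apply Zt_add; auto. apply Zt_mul. apply Zt_pw. apply Zt_sub; auto.
    apply HZ; auto. lra.
Qed.

Lemma Fm_comp f g g' : Fm f -> Fm g -> inverse_of g' g -> Fm (comp f g).
Proof.
  intros HF HG HI. assert (HG' : Fm g') by (eapply Fm_inv; eauto).
  pose proof HF as [Hof [_ [F0 [F1 [Lf HPf]]]]].
  pose proof HG as [Hog [_ [G0 [G1 [Lg HPg]]]]].
  pose proof HPf as [HLf [Haf [Hbf [Hpcf HZf]]]].
  pose proof HPg as [HLg [Hag [Hbg [Hpcg HZg]]]].
  unfold comp. split.
  { intros x Hx. rewrite Hog, Hof; auto. }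
  split; [lra|]. rewrite G0, F0, G1, F1. split; auto. split; auto.
  exists (Lg ++ map g' Lf). split; [|split; [|split; [|split]]].
  - intros l Hl. apply in_app_or in Hl. destruct Hl as [Hl|Hl]. auto.
    apply in_map_iff in Hl. destruct Hl as [l0 [<- Hl0]]. destruct (HLf l0 Hl0).
    split. apply Fm_Zt; auto. apply Fm_01; auto.
  - apply in_or_app; auto.
  - apply in_or_app; auto.
  - intros x y Hx Hxy Hy HnL.
    destruct (Hpcg x y) as [ka Hka]; auto.
    { intros l Hl. apply HnL. apply in_or_app; auto. }
    assert (Hgxy : g x < g y) by (apply Fm_mono; auto).
    pose proof (Fm_01 g HG x ltac:(lra)). pose proof (Fm_01 g HG y ltac:(lra)).
    destruct (Hpcf (g x) (g y)) as [kb Hkb]; try lra.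
    { intros l Hl [Hl1 Hl2]. apply (HnL (g' l)). apply in_or_app. right. apply in_map_iff; eauto.
      apply (Fm_mono g' HG') in Hl1. apply (Fm_mono g' HG') in Hl2.
      rewrite !(inv_l _ _ HI) in Hl1, Hl2. lra. }
    exists (kb + ka)%Z. intros z Hz.
    assert (g x <= g z <= g y) by (split; apply Fm_le; auto; lra).
    rewrite (Hkb (g z)) by auto. rewrite (Hka z) by auto. rewrite pw_add. ring.
  - intros z Hz HZ. apply HZf. apply Fm_01; auto. apply HZg; auto.
Qed.

Lemma in_seqL (p : nat -> R) n l : In l (map p (seq 0 (S n))) <-> exists i, (i <= n)%nat /\ l = p i.
Proof. rewrite in_map_iff. split.
  - intros [i [<- Hi]]. apply in_seq in Hi. exists i. split; auto; lia.
  - intros [i [Hi ->]]. exists i. split; auto. apply in_seq. lia. Qed.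

Lemma in_Ftau_Fm f : in_Ftau f -> Fm f.
Proof.
  intros [Ho [F0 [F1 [n [p [P0 [Pn [Pinc [PZ Ppc]]]]]]]]].
  assert (Pm : forall i j, (i <= j <= n)%nat -> p i <= p j).
  { intros i j. induction j; intros H. replace i with 0%nat by lia. lra.
    destruct (Nat.eq_dec i (S j)). subst; lra.
    pose proof (Pinc j ltac:(lia)). pose proof (IHj ltac:(lia)). lra. }
  assert (Pb : forall i, (i <= n)%nat -> 0 <= p i <= 1).
  { intros i Hi. rewrite <- P0, <- Pn. split; apply Pm; lia. }
  assert (Fi : forall x, 0 <= x < 1 -> exists i, (i < n)%nat /\ p i <= x < p (S i)).
  { intros x Hx.
    assert (forall k j, (n - j = k)%nat -> (j <= n)%nat -> p j <= x -> exists i, (i < n)%nat /\ p i <= x < p (S i)).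
    { induction k; intros j Hk Hj Hpj.
      - replace j with n in Hpj by lia. lra.
      - destruct (Rlt_dec x (p (S j))). exists j. split; [lia|lra].
        apply (IHk (S j)); try lia; lra. }
    apply (H n 0%nat); try lia; lra. }
  assert (FZ : forall i, (i <= n)%nat -> Zt (f (p i))).
  { induction i; intros Hi. rewrite P0, F0. apply Zt_0.
    destruct (Ppc i ltac:(lia)) as [k Hk]. rewrite Hk. 2:{ pose proof (Pinc i ltac:(lia)). lra. }
    apply Zt_add. apply IHi; lia. apply Zt_mul. apply Zt_pw. apply Zt_sub; apply PZ; lia. }
  split; auto. split; [lra|]. split; auto. split; auto.
  exists (map p (seq 0 (S n))). split; [|split; [|split; [|split]]].
  - intros l Hl. apply in_seqL in Hl. destruct Hl as [i [Hi ->]]. split; auto.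
  - apply in_seqL. exists 0%nat. split; auto; lia.
  - apply in_seqL. exists n. split; auto.
  - intros x y Hx Hxy Hy HnL. destruct (Fi x ltac:(lra)) as [i [Hi [Hi1 Hi2]]].
    assert (y <= p (S i)).
    { destruct (Rle_dec y (p (S i))); auto. exfalso. apply (HnL (p (S i))).
      apply in_seqL. exists (S i). split; auto. lra. }
    destruct (Ppc i Hi) as [k Hk]. exists k. intros z Hz.
    rewrite (Hk z) by lra. rewrite (Hk x) by lra. unfold pw. ring.
  - intros z Hz HZ. destruct (Req_dec z 1). subst. rewrite F1. apply Zt_1.
    destruct (Fi z ltac:(lra)) as [i [Hi [Hi1 Hi2]]].
    destruct (Ppc i Hi) as [k Hk]. rewrite Hk by lra.
    apply Zt_add. apply FZ; lia. apply Zt_mul. apply Zt_pw. apply Zt_sub; auto. apply PZ; lia.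
Qed.

Lemma chain_exists f L : PLprops 0 1 f L -> forall N x, In x L -> (cntgt L x <= N)%nat ->
  exists m p, p 0%nat = x /\ p m = 1 /\
    (forall i, (i < m)%nat -> p i < p (S i) /\ noL L (p i) (p (S i))) /\
    (forall i, (i <= m)%nat -> In (p i) L).
Proof.
  intros HP. pose proof HP as [HL [Ha [Hb _]]].
  induction N; intros x Hx HN.
  - destruct (HL x Hx) as [_ Bx]. destruct (Req_dec x 1).
    + exists 0%nat, (fun _ => x). split; auto. split; auto. split; intros; [lia|]. auto.
    + exfalso. assert (cntgt L x > 0)%nat.
      { pose proof (cntgt_lt L 1 x ltac:(lra) Hb). lia. } lia.
  - destruct (HL x Hx) as [_ Bx]. destruct (Req_dec x 1).
    + exists 0%nat, (fun _ => x). split; auto. split; auto. split; intros; [lia|]. auto.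
    + destruct (Lmin (fun l => x < l) L) as [m [Hm [Pm Mm]]]. { exists 1. split; auto. lra. }
      simpl in Pm.
      pose proof (cntgt_lt L m x Pm Hm).
      destruct (IHN m Hm ltac:(lia)) as [m' [p' [P0 [Pm' [Pinc PIn]]]]].
      exists (S m'), (fun i => match i with O => x | S j => p' j end).
      split; auto. split; auto. split.
      * intros i Hi. destruct i.
        -- rewrite P0. split; auto. intros l Hl [H1 H2]. specialize (Mm l Hl H1). lra.
        -- apply Pinc. lia.
      * intros i Hi. destruct i; auto. apply PIn. lia.
Qed.

Lemma Fm_in_Ftau f : Fm f -> in_Ftau f.
Proof.
  intros [Ho [_ [F0 [F1 [L HP]]]]].
  pose proof HP as [HL [Ha [Hb [Hpc HZ]]]].
  split; auto. split; auto. split; auto.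
  destruct (chain_exists f L HP (cntgt L 0) 0 Ha (le_n _)) as [m [p [P0 [Pm [Pinc PIn]]]]].
  exists m, p. split; auto. split; auto. split. intros i Hi; apply Pinc; auto.
  split. intros i Hi. apply (HL _ (PIn i Hi)).
  intros i Hi. destruct (Pinc i Hi) as [H1 H2].
  destruct (HL _ (PIn i ltac:(lia))) as [_ B1]. destruct (HL _ (PIn (S i) ltac:(lia))) as [_ B2].
  destruct (Hpc (p i) (p (S i))) as [k Hk]; try lra; auto.
  exists k. exact Hk.
Qed.

Lemma Fm_iff f : in_Ftau f <-> Fm f.
Proof. split. apply in_Ftau_Fm. apply Fm_in_Ftau. Qed.

Definition PLbij a b c d f g := PLmap a b c d f /\ PLmap c d a b g /\
  (forall x, a <= x <= b -> c <= f x <= d /\ g (f x) = x) /\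
  (forall y, c <= y <= d -> a <= g y <= b /\ f (g y) = y).

Definition glue (b : R) (f1 f2 : R -> R) : R -> R := fun x => if Rle_dec x b then f1 x else f2 x.

Lemma glue_left b f1 f2 x : x <= b -> glue b f1 f2 x = f1 x.
Proof. intros. unfold glue. destruct (Rle_dec x b); [auto|lra]. Qed.
Lemma glue_right b f1 f2 x : f1 b = f2 b -> b <= x -> glue b f1 f2 x = f2 x.
Proof. intros. unfold glue. destruct (Rle_dec x b); auto. replace x with b by lra. auto. Qed.

Lemma PLmap_ext a b c d f g : (forall x, a <= x <= b -> f x = g x) -> PLmap a b c d f -> PLmap a b c d g.
Proof.
  intros E [Hab [Ha [Hb [L [HL [HaL [HbL [Hpc HZ]]]]]]]].
  split; auto. rewrite <- !E by lra. split; auto. split; auto.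
  exists L. split; auto. split; auto. split; auto. split.
  - intros x y Hx Hxy Hy HnL. destruct (Hpc x y Hx Hxy Hy HnL) as [k Hk]. exists k.
    intros z Hz. rewrite <- !E by lra. auto.
  - intros z Hz HZz. rewrite <- E by lra. auto.
Qed.

Lemma PLmap_lt a b c d f : PLmap a b c d f -> c < d.
Proof. intros [Hab [Ha [Hb [L HP]]]]. subst. eapply PL_mono; eauto; lra. Qed.

Lemma PLmap_glue a b c d e h f1 f2 : PLmap a b c d f1 -> PLmap b e d h f2 -> PLmap a e c h (glue b f1 f2).
Proof.
  intros [Hab [Ha [Hb [L1 [HL1 [Ha1 [Hb1 [Hpc1 HZ1]]]]]]]] [Hbe [Hb' [He [L2 [HL2 [Ha2 [Hb2 [Hpc2 HZ2]]]]]]]].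
  assert (Eb : f1 b = f2 b) by congruence.
  split; [lra|]. rewrite glue_left by lra. rewrite glue_right by (auto; lra). split; auto. split; auto.
  exists (L1 ++ L2). split; [|split; [|split; [|split]]].
  - intros l Hl. apply in_app_or in Hl. destruct Hl as [Hl|Hl].
    destruct (HL1 l Hl); split; auto; lra. destruct (HL2 l Hl); split; auto; lra.
  - apply in_or_app; auto.
  - apply in_or_app; auto.
  - intros x y Hx Hxy Hy HnL.
    assert (y <= b \/ b <= x).
    { destruct (Rle_dec y b); auto. destruct (Rle_dec b x); auto. exfalso.
      apply (HnL b). apply in_or_app; auto. lra. }
    destruct H as [H|H].
    + destruct (Hpc1 x y) as [k Hk]; auto; try lra.
      { intros l Hl. apply HnL. apply in_or_app; auto. }
      exists k. intros z Hz. rewrite !glue_left by lra. auto.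
    + destruct (Hpc2 x y) as [k Hk]; auto; try lra.
      { intros l Hl. apply HnL. apply in_or_app; auto. }
      exists k. intros z Hz. rewrite !glue_right by (auto; lra). auto.
  - intros z Hz HZz. destruct (Rle_dec z b).
    rewrite glue_left by lra. apply HZ1; auto; lra.
    rewrite glue_right by (auto; lra). apply HZ2; auto; lra.
Qed.

Lemma PLbij_glue a b c d e h f1 g1 f2 g2 : PLbij a b c d f1 g1 -> PLbij b e d h f2 g2 ->
  PLbij a e c h (glue b f1 f2) (glue d g1 g2).
Proof.
  intros [P1 [Q1 [B1 C1]]] [P2 [Q2 [B2 C2]]].
  pose proof (PLmap_lt _ _ _ _ _ P1). pose proof (PLmap_lt _ _ _ _ _ P2).
  pose proof P1 as [Hab [Ha1 [Hb1 [L1 HP1]]]]. pose proof P2 as [Hbe [Ha2 [Hb2 [L2 HP2]]]].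
  pose proof Q1 as [_ [Qa1 [Qb1 _]]]. pose proof Q2 as [_ [Qa2 [Qb2 _]]].
  split; [apply (PLmap_glue a b c d e h f1 f2 P1 P2)|]. split; [apply (PLmap_glue c d a b h e g1 g2 Q1 Q2)|]. split.
  - intros x Hx. destruct (Rle_dec x b).
    + rewrite glue_left by lra. destruct (B1 x ltac:(lra)). rewrite glue_left by lra. split; auto; lra.
    + rewrite glue_right by (try congruence; lra).
      assert (f2 b < f2 x) by (eapply PL_mono; eauto; lra).
      destruct (B2 x ltac:(lra)). rewrite glue_right by (try congruence; lra). split; auto; lra.
  - intros y Hy. destruct (Rle_dec y d).
    + rewrite glue_left by lra. destruct (C1 y ltac:(lra)). rewrite glue_left by lra. split; auto; lra.
    + rewrite glue_right by (try congruence; lra).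
      pose proof Q2 as [_ [_ [_ [L2' HQ2]]]].
      assert (g2 d < g2 y) by (eapply PL_mono; eauto; lra).
      destruct (C2 y ltac:(lra)). rewrite glue_right by (try congruence; lra). split; auto; lra.
Qed.

Lemma PLbij_cong a b c d a' b' c' d' f g : a = a' -> b = b' -> c = c' -> d = d' ->
  PLbij a b c d f g -> PLbij a' b' c' d' f g.
Proof. intros; subst; auto. Qed.

Lemma PLbij_aff a b c d k : a < b -> Zt a -> Zt b -> Zt c -> d = c + pw k * (b - a) ->
  PLbij a b c d (fun x => c + pw k * (x - a)) (fun y => a + pw (-k) * (y - c)).
Proof.
  intros Hab Za Zb Zc Hd. pose proof (pw_pos k). pose proof (pw_inv_l k).
  assert (Zd : Zt d) by (rewrite Hd; apply Zt_add; auto; apply Zt_mul; [apply Zt_pw|apply Zt_sub; auto]).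
  assert (Hcd : c < d) by (rewrite Hd; nra).
  split; [|split; [|split]].
  - split; auto. split. ring. split. auto. exists (a :: b :: nil).
    split; [|split; [|split; [|split]]].
    + intros l [<-|[<-|[]]]; split; auto; lra.
    + left; auto.
    + right; left; auto.
    + intros x y _ _ _ _. exists k. intros z _. ring.
    + intros z _ HZ. apply Zt_add; auto. apply Zt_mul. apply Zt_pw. apply Zt_sub; auto.
  - split; auto. split. ring. split. rewrite Hd.
    replace (c + pw k * (b - a) - c) with (pw k * (b - a)) by ring. rewrite <- Rmult_assoc, H0. ring.
    exists (c :: d :: nil).
    split; [|split; [|split; [|split]]].
    + intros l [<-|[<-|[]]]; split; auto; lra.
    + left; auto.
    + right; left; auto.
    + intros x y _ _ _ _. exists (-k)%Z. intros z _. ring.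
    + intros z _ HZ. apply Zt_add; auto. apply Zt_mul. apply Zt_pw. apply Zt_sub; auto.
  - intros x Hx. split. rewrite Hd. split; nra.
    replace (c + pw k * (x - a) - c) with (pw k * (x - a)) by ring. rewrite <- Rmult_assoc, H0. ring.
  - intros y Hy. pose proof (pw_pos (-k)). split.
    + assert (Hy' : y - c <= pw k * (b - a)) by lra.
      split. nra. apply (Rmult_le_compat_l (pw (-k))) in Hy'; [|lra].
      rewrite <- Rmult_assoc, H0 in Hy'. lra.
    + replace (a + pw (- k) * (y - c) - a) with (pw (-k) * (y - c)) by ring.
      rewrite <- Rmult_assoc. rewrite Rmult_comm in H0. rewrite H0. ring.
Qed.

Lemma PLbij_affine a b c d k : a < b -> Zt a -> Zt b -> Zt c -> d = c + pw k * (b - a) ->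
  exists f g, PLbij a b c d f g.
Proof. intros. eexists; eexists; apply PLbij_aff; eauto. Qed.

Lemma PLbij_ext a b c d f g f2 g2 : (forall x, a <= x <= b -> f x = f2 x) -> (forall y, c <= y <= d -> g y = g2 y) ->
  PLbij a b c d f g -> PLbij a b c d f2 g2.
Proof.
  intros E1 E2 [P [Q [B C]]]. split; [eapply PLmap_ext; eauto|]. split; [eapply PLmap_ext; eauto|].
  split.
  - intros x Hx. rewrite <- E1 by auto. destruct (B x Hx). rewrite <- E2 by auto. auto.
  - intros y Hy. rewrite <- E2 by auto. destruct (C y Hy). rewrite <- E1 by auto. auto.
Qed.

Lemma PLbij_id a b : a < b -> Zt a -> Zt b -> PLbij a b a b (fun x => x) (fun x => x).
Proof. intros. eapply PLbij_ext; [| |apply (PLbij_aff a b a b 0%Z)]; auto.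
  intros; rewrite pw_0; ring. intros; simpl; unfold pw; simpl; ring. rewrite pw_0; ring. Qed.

Lemma chain : forall E F, length E = length F -> E <> nil -> forall a c, Zt a -> Zt c ->
  exists f g, PLbij a (a + sumt E) c (c + sumt F) f g.
Proof.
  induction E as [|e E IH]; intros F HEF HE a c Za Zc. congruence.
  destruct F as [|h F]. simpl in HEF; lia.
  pose proof (pw_pos e).
  destruct E as [|e' E'].
  - destruct F; [|simpl in HEF; lia].
    apply PLbij_affine with (k := (h - e)%Z); auto; try (simpl; lra).
    simpl. replace (pw e + 0) with (pw e) by ring. apply Zt_add; auto. apply Zt_pw. simpl.
    replace (a + (pw e + 0) - a) with (pw e) by ring. rewrite <- pw_add. replace (h - e + e)%Z with h by lia. ring.
  - destruct (PLbij_affine a (a + pw e) c (c + pw h) (h - e)%Z) as [f1 [g1 B1]]; auto; try lra.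
    apply Zt_add; auto; apply Zt_pw.
    replace (a + pw e - a) with (pw e) by ring. rewrite <- pw_add. replace (h - e + e)%Z with h by lia. ring.
    destruct (IH F ltac:(simpl in *; lia) ltac:(congruence) (a + pw e) (c + pw h)) as [f2 [g2 B2]];
      try (apply Zt_add; auto; apply Zt_pw).
    exists (glue (a + pw e) f1 f2), (glue (c + pw h) g1 g2).
    eapply PLbij_cong; [| | | |apply (PLbij_glue _ _ _ _ _ _ _ _ _ _ B1 B2)]; simpl; ring.
Qed.

Lemma IE a b c d : a < b -> c < d -> Zt a -> Zt b -> Zt c -> Zt d -> exists f g, PLbij a b c d f g.
Proof.
  intros Hab Hcd Za Zb Zc Zd.
  destruct (rep_pos (b - a)) as [E [HE1 HE2]]. apply Zt_sub; auto. lra.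
  destruct (rep_pos (d - c)) as [F [HF1 HF2]]. apply Zt_sub; auto. lra.
  destruct (grow (length F) E HE1) as [E' [HE'1 HE'2]].
  destruct (grow (length E) F HF1) as [F' [HF'1 HF'2]].
  destruct (chain E' F' ltac:(lia)) with (a := a) (c := c) as [f [g B]]; auto.
  { intro. subst. simpl in HE'1. destruct E; [congruence|simpl in HE'1; lia]. }
  exists f, g. eapply PLbij_cong; [| | | |apply B]; auto; lra.
Qed.

Definition ext (f : R -> R) : R -> R := fun x => if Rle_dec 0 x then if Rle_dec x 1 then f x else x else x.

Lemma ext_in f x : 0 <= x <= 1 -> ext f x = f x.
Proof. intros. unfold ext. destruct (Rle_dec 0 x); [|lra]. destruct (Rle_dec x 1); [auto|lra]. Qed.
Lemma ext_out f x : x < 0 \/ 1 < x -> ext f x = x.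
Proof. intros. unfold ext. destruct (Rle_dec 0 x); auto. destruct (Rle_dec x 1); auto. lra. Qed.

Definition FF f f' := Fm f /\ Fm f' /\ inverse_of f' f.

Lemma PLbij_FF f g : PLbij 0 1 0 1 f g -> FF (ext f) (ext g).
Proof.
  intros [P [Q [B C]]].
  assert (Fm (ext f)). { split. intros; apply ext_out; auto. eapply PLmap_ext; [|apply P]. intros; rewrite ext_in; auto. }
  assert (Fm (ext g)). { split. intros; apply ext_out; auto. eapply PLmap_ext; [|apply Q]. intros; rewrite ext_in; auto. }
  split; auto. split; auto. apply inv_intro.
  - intros x. destruct (Rle_dec 0 x); [destruct (Rle_dec x 1)|].
    + rewrite (ext_in f) by lra. destruct (B x ltac:(lra)). rewrite ext_in by lra. auto.
    + rewrite (ext_out f x), (ext_out g x) by lra. auto.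
    + rewrite (ext_out f x), (ext_out g x) by lra. auto.
  - intros x. destruct (Rle_dec 0 x); [destruct (Rle_dec x 1)|].
    + rewrite (ext_in g) by lra. destruct (C x ltac:(lra)). rewrite ext_in by lra. auto.
    + rewrite (ext_out g x), (ext_out f x) by lra. auto.
    + rewrite (ext_out g x), (ext_out f x) by lra. auto.
Qed.

Lemma PL_restrict a b f L al be : PLprops a b f L -> a <= al -> al < be -> be <= b -> Zt al -> Zt be ->
  PLmap al be (f al) (f be) f.
Proof.
  intros [HL [Ha [Hb [Hpc HZ]]]] H1 H2 H3 Z1 Z2.
  set (inab := fun l => if Rle_dec al l then if Rle_dec l be then true else false else false).
  split; auto. split; auto. split; auto.
  exists (al :: be :: filter inab L). split; [|split; [|split; [|split]]].
  - intros l [<-|[<-|Hl]]. split; auto; lra. split; auto; lra.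
    apply filter_In in Hl. destruct Hl as [Hl Hi]. unfold inab in Hi.
    destruct (Rle_dec al l); [|discriminate]. destruct (Rle_dec l be); [|discriminate].
    split; [apply HL; auto|lra].
  - left; auto.
  - right; left; auto.
  - intros x y Hx Hxy Hy HnL. apply Hpc; try lra.
    intros l Hl [Hl1 Hl2]. apply (HnL l); [|lra]. right; right. apply filter_In. split; auto.
    unfold inab. destruct (Rle_dec al l); [|lra]. destruct (Rle_dec l be); [auto|lra].
  - intros z Hz HZz. apply HZ; auto; lra.
Qed.

Lemma FF_restrict f f' al be : FF f f' -> 0 <= al -> al < be -> be <= 1 -> Zt al -> Zt be ->
  PLbij al be (f al) (f be) f f'.
Proof.
  intros [HF [HF' HI]] H1 H2 H3 Z1 Z2.
  pose proof HF as [_ [_ [_ [_ [L HP]]]]]. pose proof HF' as [_ [_ [_ [_ [L' HP']]]]].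
  assert (f al < f be) by (apply Fm_mono; auto).
  pose proof (Fm_01 f HF al ltac:(lra)). pose proof (Fm_01 f HF be ltac:(lra)).
  split; [eapply PL_restrict; eauto|]. split.
  - rewrite <- (inv_l _ _ HI al) at 2. rewrite <- (inv_l _ _ HI be) at 2.
    eapply PL_restrict; eauto; try lra; apply Fm_Zt; auto.
  - split.
    + intros x Hx. split. split; apply Fm_le; auto; lra. apply (inv_l _ _ HI).
    + intros y Hy. split. rewrite <- (inv_l _ _ HI al), <- (inv_l _ _ HI be).
      split; apply (inv_mono f); auto; lra. apply (inv_r _ _ HI).
Qed.

Lemma PLbij_vals a b c d f g : PLbij a b c d f g -> f a = c /\ f b = d /\ g c = a /\ g d = b.
Proof. intros [[_ [H1 [H2 _]]] [[_ [H3 [H4 _]]] _]]. auto. Qed.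

Lemma Tri c d j1 j2 : 0 < c -> c < d -> d < 1 -> 0 < j1 -> j1 < j2 -> j2 < 1 ->
  Zt c -> Zt d -> Zt j1 -> Zt j2 -> exists r r', FF r r' /\ r c = j1 /\ r d = j2.
Proof.
  intros. 
  destruct (IE 0 c 0 j1) as [f1 [g1 B1]]; auto; try apply Zt_0.
  destruct (IE c d j1 j2) as [f2 [g2 B2]]; auto.
  destruct (IE d 1 j2 1) as [f3 [g3 B3]]; auto; try apply Zt_1.
  pose proof (PLbij_glue _ _ _ _ _ _ _ _ _ _ B1 B2) as B12.
  pose proof (PLbij_glue _ _ _ _ _ _ _ _ _ _ B12 B3) as B.
  apply PLbij_FF in B.
  eexists; eexists; split; [apply B|].
  destruct (PLbij_vals _ _ _ _ _ _ B1) as [V1 [V2 _]].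
  destruct (PLbij_vals _ _ _ _ _ _ B2) as [V3 [V4 _]].
  rewrite !ext_in by lra.
  split.
  - rewrite glue_left by lra. rewrite glue_left by lra. auto.
  - rewrite glue_left by lra. rewrite glue_right by (try congruence; lra). auto.
Qed.

Lemma cutoff f f' d1 al be d2 : FF f f' -> 0 < d1 -> d1 < al -> al < be -> be < d2 -> d2 < 1 ->
  Zt d1 -> Zt al -> Zt be -> Zt d2 -> d1 < f al -> f be < d2 ->
  exists g g', FF g g' /\ (forall x, al <= x <= be -> g x = f x) /\
     (forall x, x <= d1 \/ d2 <= x -> g x = x).
Proof.
  intros HF H1 H2 H3 H4 H5 Z1 Z2 Z3 Z4 H6 H7.
  pose proof HF as [Fm1 [Fm2 HI]].
  assert (Zfa : Zt (f al)) by (apply Fm_Zt; auto).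
  assert (Zfb : Zt (f be)) by (apply Fm_Zt; auto).
  assert (Hfab : f al < f be) by (apply Fm_mono; auto).
  pose proof (PLbij_id 0 d1 H1 Zt_0 Z1) as P1.
  destruct (IE d1 al d1 (f al)) as [i1 [j1 P2]]; auto.
  pose proof (FF_restrict f f' al be HF ltac:(lra) H3 ltac:(lra) Z2 Z3) as P3.
  destruct (IE be d2 (f be) d2) as [i2 [j2 P4]]; auto.
  pose proof (PLbij_id d2 1 H5 Z4 Zt_1) as P5.
  pose proof (PLbij_glue _ _ _ _ _ _ _ _ _ _ P1 P2) as G1.
  pose proof (PLbij_glue _ _ _ _ _ _ _ _ _ _ G1 P3) as G2.
  pose proof (PLbij_glue _ _ _ _ _ _ _ _ _ _ G2 P4) as G3.
  pose proof (PLbij_glue _ _ _ _ _ _ _ _ _ _ G3 P5) as G4.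
  pose proof (PLbij_vals _ _ _ _ _ _ P2) as [V2a [V2b _]].
  pose proof (PLbij_vals _ _ _ _ _ _ P4) as [V4a [V4b _]].
  apply PLbij_FF in G4.
  eexists; eexists; split; [apply G4|].
  set (g1 := glue d1 (fun x => x) i1).
  assert (E1 : g1 al = f al). { unfold g1. rewrite glue_right by (try congruence; lra). auto. }
  set (g2 := glue al g1 f).
  assert (E2 : forall x, al <= x -> g2 x = f x). { intros. unfold g2. rewrite glue_right by (auto; lra). auto. }
  set (g3 := glue be g2 i2).
  assert (E2b : g2 be = i2 be) by (rewrite E2 by lra; auto).
  assert (E3 : g3 d2 = d2). { unfold g3. rewrite (glue_right be g2 i2 d2 E2b) by lra. auto. }
  split.
  - intros x Hx. rewrite ext_in by lra. rewrite glue_left by lra. fold g1 g2 g3.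
    unfold g3. rewrite glue_left by lra. apply E2; lra.
  - intros x Hx. destruct (Rle_dec 0 x); [destruct (Rle_dec x 1)|].
    + rewrite ext_in by lra. destruct Hx as [Hx|Hx].
      * rewrite glue_left by lra. fold g1 g2 g3. unfold g3. rewrite glue_left by lra.
        unfold g2. rewrite glue_left by lra. unfold g1. rewrite glue_left by lra. auto.
      * fold g1 g2 g3. rewrite glue_right by (auto; lra). auto.
    + rewrite ext_out by lra. auto.
    + rewrite ext_out by lra. auto.
Qed.

Lemma pw_succ k : pw (k + 1) = tau * pw k.
Proof. rewrite pw_add, pw_1. ring. Qed.

Lemma pw_facts : 0 < pw 4 /\ pw 4 < pw 3 /\ pw 3 < pw 2 /\ pw 2 < pw 1 /\ pw 1 < 1 /\
  pw 1 = tau /\ pw 2 = tau * tau /\ pw 3 = tau * (tau * tau) /\ pw 4 = tau * (tau * (tau * tau)) /\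
  1 = pw 1 + pw 2 /\ pw 1 = pw 2 + pw 3 /\ pw 2 = pw 3 + pw 4 /\ pw (-1) = 1 + tau.
Proof.
  pose proof tau_pos. pose proof tau_lt1. pose proof tau_eq.
  assert (E2 : pw 2 = tau * tau) by (unfold pw; simpl; ring).
  assert (E3 : pw 3 = tau * (tau * tau)) by (unfold pw; simpl; ring).
  assert (E4 : pw 4 = tau * (tau * (tau * tau))) by (unfold pw; simpl; ring).
  assert (Em : pw (-1) = 1 + tau) by (unfold pw; simpl; rewrite Rmult_1_r; apply tau_inv).
  rewrite pw_1, E2, E3, E4, Em.
  assert (0 < tau * tau) by nra. assert (0 < tau * (tau * tau)) by nra.
  assert (0 < tau * (tau * (tau * tau))) by nra.
  repeat split; try nra.
Qed.

Lemma elt_a : exists A A', FF A A' /\ (forall x, 0 <= x <= pw 3 -> A x = tau * x) /\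
  (forall x, x <= 0 \/ pw 2 <= x -> A x = x).
Proof.
  pose proof pw_facts as [H1 [H2 [H3 [H4 [H5 [E1 [E2 [E3 [E4 [S0 [S1 [S2 Em]]]]]]]]]]]].
  pose proof (PLbij_aff 0 (pw 3) 0 (pw 4) 1 ltac:(lra) Zt_0 (Zt_pw 3) Zt_0) as P1.
  pose proof (PLbij_aff (pw 3) (pw 2) (pw 4) (pw 2) (-1) ltac:(lra) (Zt_pw 3) (Zt_pw 2) (Zt_pw 4)) as P2.
  pose proof (PLbij_id (pw 2) 1 ltac:(lra) (Zt_pw 2) Zt_1) as P3.
  pose proof tau_eq.
  specialize (P1 ltac:(rewrite E1, E3, E4; ring)).
  specialize (P2 ltac:(rewrite Em, E2, E3, E4; nra)).
  pose proof (PLbij_FF _ _ (PLbij_glue _ _ _ _ _ _ _ _ _ _ (PLbij_glue _ _ _ _ _ _ _ _ _ _ P1 P2) P3)) as B.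
  eexists; eexists; split; [apply B|]. split.
  - intros x Hx. rewrite ext_in by lra. rewrite glue_left by lra. rewrite glue_left by lra.
    rewrite E1. ring.
  - intros x [Hx|Hx].
    + destruct (Req_dec x 0). subst. rewrite ext_in by lra. rewrite glue_left by lra. rewrite glue_left by lra. ring.
      rewrite ext_out by lra. auto.
    + destruct (Rle_dec x 1). rewrite ext_in by lra. rewrite glue_right; [auto| |lra].
      rewrite glue_right; [ | rewrite E1, E3, E4; ring | lra]. rewrite Em, E2, E3, E4. nra.
      rewrite ext_out by lra. auto.
Qed.

Lemma elt_b : exists B B', FF B B' /\ (forall x, 1 - pw 3 <= x <= 1 -> B x = 1 - tau * (1 - x)) /\
  (forall x, x <= pw 1 \/ 1 <= x -> B x = x).
Proof.
  pose proof pw_facts as [H1 [H2 [H3 [H4 [H5 [E1 [E2 [E3 [E4 [S0 [S1 [S2 Em]]]]]]]]]]]].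
  assert (Z3 : Zt (1 - pw 3)) by (apply Zt_sub; [apply Zt_1|apply Zt_pw]).
  assert (Z4 : Zt (1 - pw 4)) by (apply Zt_sub; [apply Zt_1|apply Zt_pw]).
  pose proof (PLbij_id 0 (pw 1) ltac:(lra) Zt_0 (Zt_pw 1)) as P1.
  pose proof (PLbij_aff (pw 1) (1 - pw 3) (pw 1) (1 - pw 4) (-1) ltac:(lra) (Zt_pw 1) Z3 (Zt_pw 1)) as P2.
  pose proof (PLbij_aff (1 - pw 3) 1 (1 - pw 4) 1 1 ltac:(lra) Z3 Zt_1 Z4) as P3.
  pose proof tau_eq.
  specialize (P2 ltac:(rewrite Em, E1, E3, E4; rewrite E1, E2 in S0; nra)).
  specialize (P3 ltac:(rewrite E1, E3, E4; ring)).
  pose proof (PLbij_FF _ _ (PLbij_glue _ _ _ _ _ _ _ _ _ _ (PLbij_glue _ _ _ _ _ _ _ _ _ _ P1 P2) P3)) as B.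
  eexists; eexists; split; [apply B|]. split.
  - intros x Hx. rewrite ext_in by lra. destruct (Req_dec x (1 - pw 3)).
    + subst. rewrite glue_left by lra. rewrite glue_right by (auto; lra). rewrite Em, E1, E2, E3, E4 in *. nra.
    + rewrite glue_right; [rewrite E1, E3, E4; ring| |lra].
      rewrite glue_right by (auto; lra). rewrite Em, E1, E2, E3, E4 in *. nra.
  - intros x [Hx|Hx].
    + destruct (Rle_dec 0 x). rewrite ext_in by lra. rewrite glue_left by lra. rewrite glue_left by lra. auto.
      rewrite ext_out by lra. auto.
    + destruct (Req_dec x 1). subst. rewrite ext_in by lra. rewrite glue_right; [rewrite E1, E3, E4; ring| |lra].
      rewrite glue_right by (auto; lra). rewrite Em, E1, E2, E3, E4 in *. nra.
      rewrite ext_out by lra. auto.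
Qed.

Lemma elt_f0 : exists F F', FF F F' /\ (forall x, 0 <= x <= pw 1 -> F x = tau * x).
Proof.
  pose proof pw_facts as [H1 [H2 [H3 [H4 [H5 [E1 [E2 [E3 [E4 [S0 [S1 [S2 Em]]]]]]]]]]]].
  pose proof (PLbij_aff 0 (pw 1) 0 (pw 2) 1 ltac:(lra) Zt_0 (Zt_pw 1) Zt_0) as P1.
  pose proof (PLbij_aff (pw 1) 1 (pw 2) 1 (-1) ltac:(lra) (Zt_pw 1) Zt_1 (Zt_pw 2)) as P2.
  pose proof tau_eq.
  specialize (P1 ltac:(rewrite E1, E2; ring)).
  specialize (P2 ltac:(rewrite Em, E1, E2 in *; nra)).
  pose proof (PLbij_FF _ _ (PLbij_glue _ _ _ _ _ _ _ _ _ _ P1 P2)) as B.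
  eexists; eexists; split; [apply B|].
  intros x Hx. rewrite ext_in by lra. rewrite glue_left by lra. rewrite E1. ring.
Qed.

Definition germ0 (f : R -> R) s e := 0 < e /\ forall x, 0 <= x <= e -> f x = s * x.
Definition germ1 (f : R -> R) s e := 0 < e /\ forall x, 1 - e <= x <= 1 -> f x = 1 - s * (1 - x).

Lemma Fm_germ0 f : Fm f -> exists k e, germ0 f (pw k) e.
Proof.
  intros [Ho [_ [F0 [F1 [L HP]]]]].
  destruct (piece_aff 0 1 f L 0 HP ltac:(lra)) as [l1 [l2 [k [B1 [B2 [_ [_ [_ Hk]]]]]]]].
  assert (l1 = 0) by lra. subst l1.
  exists k, l2. split. lra. intros x Hx. rewrite Hk by lra. rewrite F0. ring.
Qed.

Lemma Fm_germ1 f : Fm f -> exists k e, germ1 f (pw k) e.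
Proof.
  intros [Ho [_ [F0 [F1 [L HP]]]]]. pose proof HP as [HL [Ha [Hb [Hpc HZ]]]].
  destruct (Lmax (fun l => l < 1) L) as [m [Hm [Pm Mm]]]. { exists 0. split; auto; lra. }
  simpl in Pm. destruct (HL m Hm) as [_ Bm].
  destruct (Hpc m 1) as [k Hk]; try lra.
  { intros l Hl [H1 H2]. specialize (Mm l Hl H2). lra. }
  exists k, (1 - m). split. lra. intros x Hx.
  pose proof (Hk 1 ltac:(lra)). rewrite F1 in H. rewrite Hk by lra. lra.
Qed.

Lemma germ0_comp f g s1 s2 e1 e2 : germ0 f s1 e1 -> germ0 g s2 e2 -> 0 < s2 ->
  germ0 (comp f g) (s1 * s2) (Rmin e2 (e1 / s2)).
Proof.
  intros [He1 H1] [He2 H2] Hs. split.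
  - apply Rmin_glb_lt; auto. apply Rdiv_lt_0_compat; auto.
  - intros x Hx. unfold comp. pose proof (Rmin_l e2 (e1/s2)). pose proof (Rmin_r e2 (e1/s2)).
    rewrite H2 by lra. rewrite H1. ring. split. nra.
    assert (x <= e1 / s2) by lra. apply (Rmult_le_compat_l s2) in H3; [|lra].
    replace (s2 * (e1/s2)) with e1 in H3 by (field; lra). lra.
Qed.

Lemma germ0_inv f f' s e : germ0 f s e -> 0 < s -> inverse_of f' f -> germ0 f' (/ s) (s * e).
Proof.
  intros [He H] Hs HI. split. nra. intros y Hy.
  assert (f (y / s) = y).
  { rewrite H. field. lra. split. apply Rmult_le_pos; [lra|]. left; apply Rinv_0_lt_compat; auto.
    apply (Rmult_le_reg_l s); auto. unfold Rdiv. replace (s * (y * / s)) with y by (field; lra). lra. }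
  rewrite <- H0 at 1. rewrite (inv_l _ _ HI). unfold Rdiv. ring.
Qed.

Lemma germ1_comp f g s1 s2 e1 e2 : germ1 f s1 e1 -> germ1 g s2 e2 -> 0 < s2 ->
  germ1 (comp f g) (s1 * s2) (Rmin e2 (e1 / s2)).
Proof.
  intros [He1 H1] [He2 H2] Hs. split.
  - apply Rmin_glb_lt; auto. apply Rdiv_lt_0_compat; auto.
  - intros x Hx. unfold comp. pose proof (Rmin_l e2 (e1/s2)). pose proof (Rmin_r e2 (e1/s2)).
    rewrite H2 by lra. rewrite H1. ring. split. 2: nra.
    assert (1 - x <= e1 / s2) by lra. apply (Rmult_le_compat_l s2) in H3; [|lra].
    replace (s2 * (e1/s2)) with e1 in H3 by (field; lra). lra.
Qed.

Lemma germ1_inv f f' s e : germ1 f s e -> 0 < s -> inverse_of f' f -> germ1 f' (/ s) (s * e).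
Proof.
  intros [He H] Hs HI. split. nra. intros y Hy.
  assert (f (1 - (1 - y) / s) = y).
  { rewrite H. field. lra. split. 2:{ assert (0 <= (1 - y) / s) by (unfold Rdiv; apply Rmult_le_pos; [lra|left; apply Rinv_0_lt_compat; lra]). lra. }
    assert ((1 - y) / s <= e). { apply (Rmult_le_reg_l s); auto. unfold Rdiv.
      replace (s * ((1 - y) * / s)) with (1 - y) by (field; lra). lra. } lra. }
  rewrite <- H0 at 1. rewrite (inv_l _ _ HI). unfold Rdiv. ring.
Qed.

Lemma germ0_eqs f s s' e : s = s' -> germ0 f s e -> germ0 f s' e.
Proof. intros; subst; auto. Qed.
Lemma germ1_eqs f s s' e : s = s' -> germ1 f s e -> germ1 f s' e.
Proof. intros; subst; auto. Qed.

Definition csupp (h : R -> R) := exists c d, 0 < c /\ c <= d /\ d < 1 /\ forall x, x < c \/ d < x -> h x = x.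

Lemma csupp_germs h e e' : Fm h -> germ0 h 1 e -> germ1 h 1 e' -> csupp h.
Proof.
  intros [Ho _] [He H0] [He' H1]. exists (Rmin e (1/2)), (Rmax (1 - e') (1/2)).
  pose proof (Rmin_l e (1/2)). pose proof (Rmin_r e (1/2)). pose proof (Rmax_l (1-e') (1/2)). pose proof (Rmax_r (1-e') (1/2)).
  split. apply Rmin_glb_lt; lra. split. lra. split. apply Rmax_lub_lt; lra.
  intros x [Hx|Hx].
  - destruct (Rlt_dec x 0). apply Ho; auto. rewrite H0 by lra. ring.
  - destruct (Rlt_dec 1 x). apply Ho; auto. rewrite H1 by lra. ring.
Qed.

Lemma csupp_comp f g : csupp f -> csupp g -> csupp (comp f g).
Proof.
  intros [c1 [d1 [H1 [H2 [H3 H4]]]]] [c2 [d2 [G1 [G2 [G3 G4]]]]].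
  exists (Rmin c1 c2), (Rmax d1 d2).
  pose proof (Rmin_l c1 c2). pose proof (Rmin_r c1 c2). pose proof (Rmax_l d1 d2). pose proof (Rmax_r d1 d2).
  split. apply Rmin_glb_lt; lra. split. lra. split. apply Rmax_lub_lt; lra.
  intros x Hx. unfold comp. rewrite G4 by lra. apply H4. lra.
Qed.

Lemma FF_comp f f' g g' : FF f f' -> FF g g' -> FF (comp f g) (comp g' f').
Proof.
  intros [F1 [F2 FI]] [G1 [G2 GI]]. split; [apply (Fm_comp f g g'); auto|].
  split; [apply (Fm_comp g' f' f); auto; apply inv_sym; auto|].
  apply (inv_intro (comp g' f') (comp f g)); intros x; unfold comp; cbv beta.
  - rewrite (inv_l _ _ FI). apply (inv_l _ _ GI).
  - rewrite (inv_r _ _ GI). apply (inv_r _ _ FI).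
Qed.

Lemma FF_sym f f' : FF f f' -> FF f' f.
Proof. intros [A [B C]]. split; auto. split; auto. apply inv_sym; auto. Qed.

Lemma Fm_id : Fm idR.
Proof. split. intros; reflexivity. destruct (PLbij_id 0 1 ltac:(lra) Zt_0 Zt_1) as [P _]. exact P. Qed.

Lemma FF_id : FF idR idR.
Proof. split. apply Fm_id. split. apply Fm_id. apply inv_intro; intros; reflexivity. Qed.

Lemma in_FF f f' : in_Ftau f -> inverse_of f' f -> FF f f'.
Proof. intros H HI. apply Fm_iff in H. split; auto. split; auto. eapply Fm_inv; eauto. Qed.

Definition cm f f' g g' : R -> R := comp f' (comp g' (comp f g)).

Lemma cm_FF f f' g g' : FF f f' -> FF g g' -> FF (cm f f' g g') (cm g g' f f').
Proof.
  intros HF HG. unfold cm.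
  exact (FF_comp _ _ _ _ (FF_sym _ _ HF) (FF_comp _ _ _ _ (FF_sym _ _ HG) (FF_comp _ _ _ _ HF HG))).
Qed.

Lemma cm_csupp f f' g g' : FF f f' -> FF g g' -> csupp (cm f f' g g').
Proof.
  intros HF HG. pose proof (cm_FF _ _ _ _ HF HG) as [HC _].
  pose proof HF as [F1 [F2 FI]]. pose proof HG as [G1 [G2 GI]].
  destruct (Fm_germ0 f F1) as [k1 [e1 A1]]. destruct (Fm_germ0 g G1) as [k2 [e2 A2]].
  destruct (Fm_germ1 f F1) as [m1 [d1 B1]]. destruct (Fm_germ1 g G1) as [m2 [d2 B2]].
  pose proof (pw_pos k1). pose proof (pw_pos k2). pose proof (pw_pos m1). pose proof (pw_pos m2).
  pose proof (germ0_inv _ _ _ _ A1 H FI) as A1'. pose proof (germ0_inv _ _ _ _ A2 H0 GI) as A2'.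
  pose proof (germ1_inv _ _ _ _ B1 H1 FI) as B1'. pose proof (germ1_inv _ _ _ _ B2 H2 GI) as B2'.
  assert (0 < / pw k1) by (apply Rinv_0_lt_compat; auto).
  assert (0 < / pw k2) by (apply Rinv_0_lt_compat; auto).
  assert (0 < / pw m1) by (apply Rinv_0_lt_compat; auto).
  assert (0 < / pw m2) by (apply Rinv_0_lt_compat; auto).
  pose proof (germ0_comp _ _ _ _ _ _ A1 A2 H0) as C1.
  pose proof (germ0_comp _ _ _ _ _ _ A2' C1 ltac:(repeat apply Rmult_lt_0_compat; auto)) as C2.
  pose proof (germ0_comp _ _ _ _ _ _ A1' C2 ltac:(repeat apply Rmult_lt_0_compat; auto)) as C3.
  pose proof (germ1_comp _ _ _ _ _ _ B1 B2 H2) as D1.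
  pose proof (germ1_comp _ _ _ _ _ _ B2' D1 ltac:(repeat apply Rmult_lt_0_compat; auto)) as D2.
  pose proof (germ1_comp _ _ _ _ _ _ B1' D2 ltac:(repeat apply Rmult_lt_0_compat; auto)) as D3.
  eapply csupp_germs. exact HC.
  - eapply germ0_eqs; [|exact C3]. field. lra.
  - eapply germ1_eqs; [|exact D3]. field. lra.
Qed.

Lemma Fp_app a b : in_Ftau' a -> in_Ftau' b -> in_Ftau' (comp a b).
Proof. intros Ha Hb. induction Hb. exact Ha. apply (Ftau'_mul (comp a h) c); auto. Qed.

Lemma comm_Fp c : is_commutator c -> in_Ftau' c.
Proof. intros H. exact (Ftau'_mul idR c Ftau'_id H). Qed.

Lemma cm_is f f' g g' : in_Ftau f -> in_Ftau g -> inverse_of f' f -> inverse_of g' g -> is_commutator (cm f f' g g').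
Proof. intros. exists f, g, f', g'. split; [auto|split; [auto|split; [auto|split; [auto|reflexivity]]]]. Qed.

Lemma is_comm_cm c : is_commutator c -> exists f f' g g', in_Ftau f /\ in_Ftau g /\ FF f f' /\ FF g g' /\ c = cm f f' g g'.
Proof. intros [f [g [f' [g' [H1 [H2 [H3 [H4 H5]]]]]]]]. exists f, f', g, g'.
  split; auto. split; auto. split. apply in_FF; auto. split. apply in_FF; auto. auto. Qed.

Lemma Fp_props h : in_Ftau' h -> exists h', in_Ftau' h' /\ FF h h' /\ csupp h.
Proof.
  intros H. induction H.
  - exists idR. split. constructor. split. apply FF_id.
    exists (1/2), (1/2). split; [lra|split; [lra|split; [lra|intros; reflexivity]]].
  - destruct IHin_Ftau' as [h' [Hh' [HF HS]]].
    destruct (is_comm_cm c H0) as [f [f' [g [g' [Hf [Hg [HFf [HFg ->]]]]]]]].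
    exists (comp (cm g g' f f') h'). split.
    + apply Fp_app; auto. apply comm_Fp. apply cm_is; auto. apply HFg. apply HFf.
    + split. apply FF_comp; auto. apply cm_FF; auto.
      apply csupp_comp; auto. apply cm_csupp; auto.
Qed.

Lemma maps_into (u : R -> R) (S : R -> Prop) : (forall x, ~ S x -> u x = x) ->
  (forall x y, u x = u y -> x = y) -> forall x, S x -> S (u x).
Proof. intros H1 H2 x Hx. apply NNPP. intro Hc. pose proof (H1 _ Hc) as E.
  apply H2 in E. apply Hc. rewrite E. auto. Qed.

Lemma disj_comm (u v : R -> R) (S T : R -> Prop) : (forall x, ~ S x -> u x = x) -> (forall x, ~ T x -> v x = x) ->
  (forall x, S x -> ~ T x) -> (forall x, S x -> S (u x)) -> (forall x, T x -> T (v x)) -> comp u v = comp v u.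
Proof.
  intros Hu Hv HST Su Tv. apply functional_extensionality. intros x. unfold Defs.comp.
  destruct (classic (S x)) as [Sx|Sx].
  - rewrite (Hv x) by auto. rewrite (Hv (u x)); auto.
  - destruct (classic (T x)) as [Tx|Tx].
    + rewrite (Hu x) by auto. rewrite (Hu (v x)); auto. intro. apply (HST (v x)); auto.
    + rewrite (Hu x), (Hv x) by auto. rewrite (Hu x); auto.
Qed.

Lemma Fm_maps01 u c d : Fm u -> (forall x, x < c \/ d < x -> u x = x) -> forall y, c <= y <= d -> c <= u y <= d.
Proof. intros HF Hu y Hy. apply (maps_into u (fun z => c <= z <= d)); auto.
  - intros x Hx. apply Hu. lra.
  - apply Fm_inj; auto. Qed.

Lemma conj_agree u v v' w w' c d : (forall x, x < c \/ d < x -> u x = x) -> Fm u -> FF v v' -> FF w w' ->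
  c <= d -> (forall x, v' c <= x <= v' d -> w x = v x) -> comp v' (comp u v) = comp w' (comp u w).
Proof.
  intros Hu HU [V1 [V2 VI]] [W1 [W2 WI]] Hcd Hag.
  apply functional_extensionality. intros x. unfold Defs.comp.
  assert (Mv : forall y, c <= y <= d -> v' c <= v' y <= v' d) by (intros; split; apply Fm_le; auto; lra).
  destruct (classic (v' c <= x <= v' d)) as [Hx|Hx].
  - rewrite Hag by auto.
    assert (Hvx : c <= v x <= d).
    { rewrite <- (inv_r _ _ VI c), <- (inv_r _ _ VI d). split; apply Fm_le; auto; lra. }
    pose proof (Fm_maps01 u c d HU Hu _ Hvx) as Huv.
    set (y := u (v x)) in *.
    assert (w (v' y) = y) by (rewrite Hag by (apply Mv; auto); apply (inv_r _ _ VI)).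
    rewrite <- H at 2. rewrite (inv_l _ _ WI). auto.
  - assert (Hvx : ~ (c <= v x <= d)).
    { intro Hc. apply Hx. rewrite <- (inv_l _ _ VI x). apply Mv; auto. }
    rewrite (Hu (v x)) by lra. rewrite (inv_l _ _ VI).
    assert (Hwx : ~ (c <= w x <= d)).
    { intro Hc. set (z := v' (w x)). assert (Hz : v' c <= z <= v' d) by (apply Mv; auto).
      assert (w z = w x) by (rewrite Hag by auto; unfold z; apply (inv_r _ _ VI)).
      apply Fm_inj in H; auto. apply Hx. rewrite <- H. auto. }
    rewrite (Hu (w x)) by lra. rewrite (inv_l _ _ WI). auto.
Qed.

Fixpoint itn (n : nat) (A : R -> R) : R -> R := match n with O => idR | S n => comp A (itn n A) end.

Definition powf (A A' : R -> R) (k : Z) : R -> R :=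
  match k with Z0 => idR | Zpos p => itn (Pos.to_nat p) A | Zneg p => itn (Pos.to_nat p) A' end.

Lemma itn_comm u v n : comp u v = comp v u -> comp (itn n u) v = comp v (itn n u).
Proof. intros H. induction n; simpl. reflexivity.
  change (comp u (comp (itn n u) v) = comp v (comp u (itn n u))). rewrite IHn.
  change (comp (comp u v) (itn n u) = comp (comp v u) (itn n u)). rewrite H. reflexivity. Qed.

Lemma itn_comm2 u v n m : comp u v = comp v u -> comp (itn n u) (itn m v) = comp (itn m v) (itn n u).
Proof. intros H. symmetry. apply itn_comm. symmetry. apply itn_comm. auto. Qed.

Lemma itn_FF A A' n : FF A A' -> FF (itn n A) (itn n A').
Proof. intros H. induction n; simpl. apply FF_id.
  pose proof (FF_comp _ _ _ _ H IHn).
  assert (E : comp (itn n A') A' = comp A' (itn n A')) by (apply itn_comm; reflexivity).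
  rewrite E in H0. auto. Qed.

Lemma powf_FF A A' k : FF A A' -> FF (powf A A' k) (powf A A' (- k)).
Proof. intros H. destruct k; simpl. apply FF_id. apply itn_FF; auto. apply itn_FF. apply FF_sym; auto. Qed.

Lemma powf_comm A A' k m : FF A A' -> comp (powf A A' k) (powf A A' m) = comp (powf A A' m) (powf A A' k).
Proof.
  intros [_ [_ [H1 H2]]].
  assert (C1 : comp A A' = comp A' A) by congruence.
  destruct k; destruct m; simpl; try reflexivity; apply itn_comm2; auto.
Qed.

Lemma itn_supp A (S : R -> Prop) n : (forall x, ~ S x -> A x = x) -> forall x, ~ S x -> itn n A x = x.
Proof. intros H. induction n; intros x Hx; simpl. reflexivity. unfold Defs.comp. rewrite IHn; auto. Qed.

Lemma powf_supp A A' (S : R -> Prop) k : FF A A' -> (forall x, ~ S x -> A x = x) -> forall x, ~ S x -> powf A A' k x = x.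
Proof.
  intros [_ [_ HI]] H. assert (H' : forall x, ~ S x -> A' x = x).
  { intros x Hx. rewrite <- (H x Hx) at 1. apply (inv_l _ _ HI). }
  destruct k; simpl; intros; try reflexivity; [apply (itn_supp A S) | apply (itn_supp A' S)]; auto.
Qed.

Lemma germ0_id : germ0 idR 1 1.
Proof. split. lra. intros; unfold idR; ring. Qed.
Lemma germ1_id : germ1 idR 1 1.
Proof. split. lra. intros; unfold idR; ring. Qed.

Lemma itn_germ0 A s e : germ0 A s e -> 0 < s -> forall n, exists e', germ0 (itn n A) (s ^ n) e'.
Proof. intros H Hs. induction n; simpl. exists 1. apply germ0_id.
  destruct IHn as [e' He']. eexists. apply (germ0_comp _ _ _ _ _ _ H He'). apply pow_lt; auto. Qed.

Lemma itn_germ1 A s e : germ1 A s e -> 0 < s -> forall n, exists e', germ1 (itn n A) (s ^ n) e'.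
Proof. intros H Hs. induction n; simpl. exists 1. apply germ1_id.
  destruct IHn as [e' He']. eexists. apply (germ1_comp _ _ _ _ _ _ H He'). apply pow_lt; auto. Qed.

Lemma powf_germ0 A A' e : FF A A' -> germ0 A tau e -> forall k, exists e', germ0 (powf A A' k) (pw k) e'.
Proof.
  intros [_ [_ HI]] H. pose proof tau_pos.
  pose proof (germ0_inv _ _ _ _ H H0 HI) as H'.
  destruct k; simpl.
  - exists 1. apply germ0_id.
  - destruct (itn_germ0 A tau e H H0 (Pos.to_nat p)) as [e' He']. exists e'. unfold pw. simpl. auto.
  - destruct (itn_germ0 A' (/tau) (tau * e) H' (Rinv_0_lt_compat _ H0) (Pos.to_nat p)) as [e' He'].
    exists e'. unfold pw. simpl. rewrite <- pow_inv. auto.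
Qed.

Lemma powf_germ1 A A' e : FF A A' -> germ1 A tau e -> forall k, exists e', germ1 (powf A A' k) (pw k) e'.
Proof.
  intros [_ [_ HI]] H. pose proof tau_pos.
  pose proof (germ1_inv _ _ _ _ H H0 HI) as H'.
  destruct k; simpl.
  - exists 1. apply germ1_id.
  - destruct (itn_germ1 A tau e H H0 (Pos.to_nat p)) as [e' He']. exists e'. unfold pw. simpl. auto.
  - destruct (itn_germ1 A' (/tau) (tau * e) H' (Rinv_0_lt_compat _ H0) (Pos.to_nat p)) as [e' He'].
    exists e'. unfold pw. simpl. rewrite <- pow_inv. auto.
Qed.

Lemma Zt_Rmin a b : Zt a -> Zt b -> Zt (Rmin a b).
Proof. intros. unfold Rmin. destruct (Rle_dec a b); auto. Qed.
Lemma Zt_Rmax a b : Zt a -> Zt b -> Zt (Rmax a b).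
Proof. intros. unfold Rmax. destruct (Rle_dec a b); auto. Qed.

Lemma Fm_0 f : Fm f -> f 0 = 0.
Proof. intros [_ [_ [H _]]]. auto. Qed.
Lemma Fm_1 f : Fm f -> f 1 = 1.
Proof. intros [_ [_ [_ [H _]]]]. auto. Qed.

Lemma Fm_pos f x : Fm f -> 0 < x -> 0 < f x.
Proof. intros HF Hx. rewrite <- (Fm_0 f HF). apply Fm_mono; auto. Qed.
Lemma Fm_lt1 f x : Fm f -> x < 1 -> f x < 1.
Proof. intros HF Hx. rewrite <- (Fm_1 f HF). apply Fm_mono; auto. Qed.

Lemma agree_Fp h h' c d : FF h h' -> 0 < c -> c <= d -> d < 1 ->
  exists q q', in_Ftau' q /\ FF q q' /\ forall x, c <= x <= d -> q x = h x.
Proof.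
  intros HF Hc Hcd Hd. pose proof HF as [H1 [H2 HI]].
  pose proof (Fm_pos h c H1 Hc). pose proof (Fm_lt1 h d H1 Hd).
  destruct (Zt_dense 0 (Rmin c (h c))) as [a0 [Za0 Ha0]]. { apply Rmin_glb_lt; lra. }
  destruct (Zt_dense (Rmax d (h d)) 1) as [b0 [Zb0 Hb0]]. { apply Rmax_lub_lt; lra. }
  pose proof (Rmin_l c (h c)). pose proof (Rmin_r c (h c)). pose proof (Rmax_l d (h d)). pose proof (Rmax_r d (h d)).
  pose proof (Fm_pos h a0 H1 ltac:(lra)). pose proof (Fm_lt1 h b0 H1 ltac:(lra)).
  pose proof (Rmin_l a0 (h a0)). pose proof (Rmin_r a0 (h a0)). pose proof (Rmax_l b0 (h b0)). pose proof (Rmax_r b0 (h b0)).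
  set (lo := Rmin a0 (h a0)) in *. set (hi := Rmax b0 (h b0)) in *.
  assert (Zlo : Zt lo) by (apply Zt_Rmin; auto; apply Fm_Zt; auto).
  assert (Zhi : Zt hi) by (apply Zt_Rmax; auto; apply Fm_Zt; auto).
  assert (Hlo : 0 < lo) by (apply Rmin_glb_lt; lra).
  assert (Hhi : hi < 1) by (apply Rmax_lub_lt; lra).
  destruct (Zt_dense hi 1 Hhi) as [d1 [Zd1 Hd1]].
  destruct (Zt_dense d1 1 ltac:(lra)) as [t1 [Zt1 Ht1]].
  destruct (Zt_dense t1 1 ltac:(lra)) as [t2 [Zt2 Ht2]].
  destruct (Zt_dense t2 1 ltac:(lra)) as [d2 [Zd2 Hd2]].
  destruct (Tri lo hi t1 t2 ltac:(lra) ltac:(lra) ltac:(lra) ltac:(lra) ltac:(lra) ltac:(lra) Zlo Zhi Zt1 Zt2) as [p [p' [HP [Pl Ph]]]].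
  pose proof HP as [P1 [P2 PI]].
  pose proof (FF_comp _ _ _ _ HP (FF_comp _ _ _ _ HF (FF_sym _ _ HP))) as HPhi.
  set (phi := comp p (comp h p')) in *.
  assert (Ephi : forall y, phi (p y) = p (h y)).
  { intros. unfold phi, Defs.comp. rewrite (inv_l _ _ PI). auto. }
  assert (Hal1 : t1 <= p a0) by (rewrite <- Pl; apply Fm_le; auto).
  assert (Hbe1 : p b0 <= t2) by (rewrite <- Ph; apply Fm_le; auto).
  assert (Hab : p a0 < p b0) by (apply Fm_mono; auto; lra).
  assert (Hpa : t1 <= phi (p a0)) by (rewrite Ephi, <- Pl; apply Fm_le; auto).
  assert (Hpb : phi (p b0) <= t2) by (rewrite Ephi, <- Ph; apply Fm_le; auto).
  assert (Zpa : Zt (p a0)) by (apply Fm_Zt; auto).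
  assert (Zpb : Zt (p b0)) by (apply Fm_Zt; auto).
  destruct (cutoff phi _ d1 (p a0) (p b0) d2 HPhi ltac:(lra) ltac:(lra) ltac:(lra) ltac:(lra) ltac:(lra)
     Zd1 Zpa Zpb Zd2 ltac:(lra) ltac:(lra)) as [r [r' [HR [Ragr Rid]]]].
  pose proof HR as [R1 [R2 RI]].
  exists (cm p p' r' r), (cm r' r p p'). split; [|split].
  - apply comm_Fp. apply cm_is. apply Fm_in_Ftau; auto. apply Fm_in_Ftau; auto. auto. apply inv_sym; auto.
  - apply cm_FF; auto. apply FF_sym; auto.
  - intros x Hx. unfold cm, Defs.comp.
    assert (Erx : r x = x) by (apply Rid; lra).
    assert (Er : r' x = x) by (rewrite <- Erx at 1; apply (inv_l _ _ RI)).
    rewrite Er. rewrite Ragr. rewrite Ephi. apply (inv_l _ _ PI).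
    split; apply Fm_le; auto; lra.
Qed.

Definition NSG N := normal_subgroup_of_Ftau' N.

Lemma N_normF N n h h' : NSG N -> N n -> FF h h' -> N (comp h' (comp n h)).
Proof.
  intros HN Hn HF. pose proof HN as [Nsub [Nid [Ncomp [Ninv Nconj]]]].
  destruct (Fp_props n (Nsub n Hn)) as [n' [_ [HFn [c [d [Hc [Hcd [Hd Hsupp]]]]]]]].
  pose proof HF as [H1 [H2 HI]].
  assert (0 < h' c) by (apply Fm_pos; auto). assert (h' d < 1) by (apply Fm_lt1; auto).
  assert (h' c <= h' d) by (apply Fm_le; auto).
  destruct (agree_Fp h h' (h' c) (h' d) HF) as [q [q' [Hq [HQ Hagr]]]]; auto.
  rewrite (conj_agree n h h' q q' c d); auto. apply Nconj; auto. apply HQ. apply HFn.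
Qed.

Lemma move_off g : Fm g -> g <> idR -> exists j1 j2, Zt j1 /\ Zt j2 /\ 0 < j1 /\ j1 < j2 /\ j2 < 1 /\
  forall z, j1 <= z <= j2 -> ~ (j1 <= g z <= j2).
Proof.
  intros HG Hne.
  assert (exists x0, g x0 <> x0).
  { apply NNPP. intro Hc. apply Hne. apply functional_extensionality. intros x.
    apply NNPP. intro H. apply Hc. exists x. auto. }
  destruct H as [x0 Hx0].
  pose proof HG as [Ho [_ [G0 [G1 [L HP]]]]].
  assert (0 <= x0 < 1).
  { destruct (Rlt_dec x0 0). exfalso; apply Hx0; apply Ho; auto.
    destruct (Rlt_dec x0 1). lra. destruct (Req_dec x0 1). subst; contradiction.
    exfalso; apply Hx0; apply Ho; lra. }
  destruct (piece_aff 0 1 g L x0 HP H) as [l1 [l2 [k [B1 [B2 [_ [_ [_ Hk]]]]]]]].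
  set (s := pw k). pose proof (pw_pos k) as Hs. fold s in Hs, Hk.
  assert (Lin : forall z, x0 <= z <= l2 -> g z = g x0 + s * (z - x0)).
  { intros. rewrite Hk by lra. rewrite (Hk x0) by lra. ring. }
  destruct (Rlt_dec x0 (g x0)).
  - pose proof (Rmin_l (l2 - x0) (g x0 - x0)). pose proof (Rmin_r (l2 - x0) (g x0 - x0)).
    set (e := Rmin (l2 - x0) (g x0 - x0)) in *.
    assert (0 < e) by (apply Rmin_glb_lt; lra).
    destruct (Zt_dense x0 (x0 + e/2)) as [j1 [Z1 Hj1]]; [lra|].
    destruct (Zt_dense j1 (x0 + e/2)) as [j2 [Z2 Hj2]]; [lra|].
    exists j1, j2. split; [auto|split; [auto|split; [lra|split; [lra|split; [lra|]]]]].
    intros z Hz [Hz1 Hz2]. rewrite Lin in Hz2 by lra.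
    assert (0 <= s * (z - x0)) by (apply Rmult_le_pos; lra). lra.
  - assert (g x0 < x0) by lra.
    pose proof (Rmin_l (l2 - x0) ((x0 - g x0) / (2 * s))). pose proof (Rmin_r (l2 - x0) ((x0 - g x0) / (2 * s))).
    set (e := Rmin (l2 - x0) ((x0 - g x0) / (2 * s))) in *.
    assert (0 < e). { apply Rmin_glb_lt. lra. apply Rdiv_lt_0_compat; lra. }
    assert (Hse : s * e <= (x0 - g x0) / 2).
    { apply (Rmult_le_compat_l s) in H2; [|lra]. replace (s * ((x0 - g x0) / (2 * s))) with ((x0 - g x0)/2) in H2 by (field; lra). lra. }
    destruct (Zt_dense x0 (x0 + e)) as [j1 [Z1 Hj1]]; [lra|].
    destruct (Zt_dense j1 (x0 + e)) as [j2 [Z2 Hj2]]; [lra|].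
    exists j1, j2. split; [auto|split; [auto|split; [lra|split; [lra|split; [lra|]]]]].
    intros z Hz [Hz1 Hz2]. rewrite Lin in Hz1 by lra.
    assert (s * (z - x0) <= s * e) by (apply Rmult_le_compat_l; lra). lra.
Qed.

Lemma N_mover N g : NSG N -> N g -> g <> idR -> forall c d, 0 < c -> c <= d -> d < 1 ->
  exists x x', N x /\ N x' /\ FF x x' /\ forall z, c <= z <= d -> ~ (c <= x z <= d).
Proof.
  intros HN Hg Hne c d Hc Hcd Hd. pose proof HN as [Nsub [Nid [Ncomp [Ninv Nconj]]]].
  destruct (Fp_props g (Nsub g Hg)) as [g' [_ [HG _]]].
  pose proof HG as [G1 [G2 GI]].
  destruct (move_off g G1 Hne) as [j1 [j2 [Z1 [Z2 [H1 [H2 [H3 Hmv]]]]]]].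
  destruct (Zt_dense 0 c Hc) as [c' [Zc' Hc']].
  destruct (Zt_dense d 1 Hd) as [d' [Zd' Hd']].
  destruct (Tri c' d' j1 j2) as [r [r' [HR [Rc Rd]]]]; auto; try lra.
  pose proof HR as [R1 [R2 RI]].
  exists (comp r' (comp g r)), (comp r' (comp g' r)). split; [|split; [|split]].
  - apply N_normF; auto.
  - apply N_normF; auto. apply (Ninv g); auto.
  - pose proof (FF_comp _ _ _ _ (FF_sym _ _ HR) (FF_comp _ _ _ _ HG HR)). exact H.
  - intros z Hz Hc2. unfold Defs.comp in Hc2.
    assert (j1 <= r z <= j2). { rewrite <- Rc, <- Rd. split; apply Fm_le; auto; lra. }
    apply (Hmv (r z)); auto.
    rewrite <- (inv_r _ _ RI (g (r z))). rewrite <- Rc, <- Rd. split; apply Fm_le; auto; lra.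
Qed.

Lemma higman N x x' u u' v v' c d : NSG N -> N x -> N x' -> FF x x' ->
  (forall z, c <= z <= d -> ~ (c <= x z <= d)) -> FF u u' -> FF v v' ->
  (forall z, z < c \/ d < z -> u z = z) -> (forall z, z < c \/ d < z -> v z = z) -> c <= d ->
  N (cm u u' v v').
Proof.
  intros HN Nx Nx' HX Hmv HU HV Hu Hv Hcd. pose proof HN as [Nsub [Nid [Ncomp [Ninv Nconj]]]].
  pose proof HX as [X1 [X2 XI]]. pose proof HU as [U1 [U2 UI]]. pose proof HV as [V1 [V2 VI]].
  set (m := cm x x' u u'). set (m' := cm u u' x x').
  assert (HM : FF m m') by (apply cm_FF; auto).
  assert (Nm : N m) by (apply Ncomp; auto; apply N_normF; auto).
  assert (Nm' : N m') by (apply (Ninv m); auto; apply HM).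
  assert (N (cm m m' v v')) by (apply Ncomp; auto; apply N_normF; auto).
  replace (cm u u' v v') with (cm m m' v v'); auto.
  set (w := comp x' (comp u' x)). set (w' := comp x' (comp u x)).
  assert (Hv' : forall z, z < c \/ d < z -> v' z = z).
  { intros z Hz. rewrite <- (Hv z Hz) at 1. apply (inv_l _ _ VI). }
  assert (Cw : comp w' v' = comp v' w').
  { apply (disj_comm w' v' (fun z => c <= x z <= d) (fun z => c <= z <= d)).
    - intros z Hz. unfold w', Defs.comp. rewrite Hu by lra. apply (inv_l _ _ XI).
    - intros z Hz. apply Hv'. lra.
    - intros z Hz Hz2. apply (Hmv z); auto.
    - intros z Hz. unfold w', Defs.comp. rewrite (inv_r _ _ XI). apply Fm_maps01; auto.
    - intros z Hz. apply Fm_maps01; auto. }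
  apply functional_extensionality. intros z. unfold m, m', cm, Defs.comp.
  pose proof (equal_f Cw) as Cw'. unfold w, w', Defs.comp in Cw'.
  rewrite Cw'. rewrite (inv_r _ _ XI). rewrite (inv_r _ _ UI). rewrite (inv_l _ _ XI). reflexivity.
Qed.

Lemma N_hf N g h h' f f' : NSG N -> N g -> g <> idR -> FF h h' -> csupp h -> FF f f' -> N (cm h h' f f').
Proof.
  intros HN Ng Hne HH [c [d [Hc [Hcd [Hd Hs]]]]] HF.
  pose proof HF as [F1 [F2 FI]]. pose proof HH as [H1 [H2 HI]].
  pose proof (Fm_pos f' c F2 Hc). pose proof (Fm_lt1 f' d F2 Hd).
  assert (f' c <= f' d) by (apply Fm_le; auto).
  destruct (Zt_dense 0 (Rmin c (f' c))) as [al [Zal Hal]]. { apply Rmin_glb_lt; lra. }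
  destruct (Zt_dense (Rmax d (f' d)) 1) as [be [Zbe Hbe]]. { apply Rmax_lub_lt; lra. }
  pose proof (Rmin_l c (f' c)). pose proof (Rmin_r c (f' c)). pose proof (Rmax_l d (f' d)). pose proof (Rmax_r d (f' d)).
  pose proof (Fm_pos f al F1 ltac:(lra)). pose proof (Fm_lt1 f be F1 ltac:(lra)).
  destruct (Zt_dense 0 (Rmin al (f al))) as [d1 [Zd1 Hd1]]. { apply Rmin_glb_lt; lra. }
  destruct (Zt_dense (Rmax be (f be)) 1) as [d2 [Zd2 Hd2]]. { apply Rmax_lub_lt; lra. }
  pose proof (Rmin_l al (f al)). pose proof (Rmin_r al (f al)). pose proof (Rmax_l be (f be)). pose proof (Rmax_r be (f be)).
  destruct (cutoff f f' d1 al be d2 HF) as [g0 [g0' [HG [Gagr Gid]]]]; auto; try lra.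
  pose proof HG as [G1 [G2 GI]].
  assert (E : comp f' (comp h f) = comp g0' (comp h g0)).
  { apply (conj_agree h f f' g0 g0' c d); auto. intros x Hx. apply Gagr. lra. }
  unfold cm. rewrite E. fold (cm h h' g0 g0').
  pose proof (Rmin_l c d1). pose proof (Rmin_r c d1). pose proof (Rmax_l d d2). pose proof (Rmax_r d d2).
  assert (0 < Rmin c d1) by (apply Rmin_glb_lt; lra).
  assert (Rmax d d2 < 1) by (apply Rmax_lub_lt; lra).
  set (c2 := Rmin c d1) in *. set (d2' := Rmax d d2) in *.
  destruct (N_mover N g HN Ng Hne c2 d2' ltac:(lra) ltac:(lra) ltac:(lra)) as [x [x' [Nx [Nx' [HX Hmv]]]]].
  apply (higman N x x' h h' g0 g0' c2 d2'); auto.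
  - intros z Hz. apply Hs. destruct Hz; [left|right]; lra.
  - intros z Hz. apply Gid. destruct Hz; [left|right]; lra.
  - lra.
Qed.

Lemma decomp A A' B B' : FF A A' -> FF B B' ->
  germ0 A tau (pw 3) -> germ1 B tau (pw 3) ->
  (forall x, x <= 0 \/ pw 2 <= x -> A x = x) -> (forall x, x <= pw 1 \/ 1 <= x -> B x = x) ->
  forall f f', FF f f' -> exists k m h h',
    FF h h' /\ csupp h /\
    f = comp h (comp (powf A A' k) (powf B B' m)) /\
    f' = comp (comp (powf B B' (- m)) (powf A A' (- k))) h'.
Proof.
  intros HA HB GA GB Aid Bid f f' HF.
  pose proof pw_facts as [P4 [P43 [P32 [P21 [P1 _]]]]].
  pose proof HF as [F1 [F2 FI]].
  destruct (Fm_germ0 f F1) as [k [e0 G0]]. destruct (Fm_germ1 f F1) as [m [e1 G1]].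
  set (a := powf A A' k). set (b := powf B B' m).
  set (E := comp a b). set (E' := comp (powf B B' (- m)) (powf A A' (- k))).
  assert (HE : FF E E') by (apply FF_comp; apply powf_FF; auto).
  pose proof HE as [E1 [E2 EI]].
  destruct (powf_germ0 A A' (pw 3) HA GA k) as [ea Ga].
  destruct (powf_germ1 B B' (pw 3) HB GB m) as [eb Gb].
  assert (Gb0 : germ0 b 1 (pw 1)).
  { split. lra. intros x Hx. unfold b. rewrite (powf_supp B B' (fun x => pw 1 < x < 1)); auto. ring.
    intros y Hy. apply Bid. lra. lra. }
  assert (Ga1 : germ1 a 1 (1 - pw 2)).
  { split. lra. intros x Hx. unfold a. rewrite (powf_supp A A' (fun x => 0 < x < pw 2)); auto. ring.
    intros y Hy. apply Aid. lra. lra. }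
  pose proof (pw_pos k). pose proof (pw_pos m).
  pose proof (germ0_comp _ _ _ _ _ _ Ga Gb0 ltac:(lra)) as GE0.
  pose proof (germ1_comp _ _ _ _ _ _ Ga1 Gb ltac:(lra)) as GE1.
  pose proof (germ0_inv _ _ _ _ GE0 ltac:(nra) EI) as GE0'.
  pose proof (germ1_inv _ _ _ _ GE1 ltac:(nra) EI) as GE1'.
  assert (0 < / (pw k * 1)) by (apply Rinv_0_lt_compat; nra).
  assert (0 < / (1 * pw m)) by (apply Rinv_0_lt_compat; nra).
  pose proof (germ0_comp _ _ _ _ _ _ G0 GE0' H1) as Gh0.
  pose proof (germ1_comp _ _ _ _ _ _ G1 GE1' H2) as Gh1.
  exists k, m, (comp f E'), (comp E f').
  assert (HH : FF (comp f E') (comp E f')) by (apply FF_comp; auto; apply FF_sym; auto).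
  split; auto. split.
  - eapply csupp_germs. apply HH.
    eapply germ0_eqs; [|exact Gh0]. field. lra.
    eapply germ1_eqs; [|exact Gh1]. field. lra.
  - split; apply functional_extensionality; intros z; unfold Defs.comp.
    + fold a b. change (f z = f (E' (E z))). rewrite (inv_l _ _ EI). auto.
    + change (f' z = E' (E (f' z))). rewrite (inv_l _ _ EI). auto.
Qed.

Lemma N_all N g : NSG N -> N g -> g <> idR -> forall f f' k k', FF f f' -> FF k k' -> N (cm f f' k k').
Proof.
  intros HN Ng Hne f f' k k' HF HK.
  pose proof HN as [Nsub [Nid [Ncomp [Ninv Nconj]]]].
  pose proof pw_facts as [P4 [P43 [P32 [P21 [P1 _]]]]].
  destruct elt_a as [A [A' [HA [Ag Aid]]]]. destruct elt_b as [B [B' [HB [Bg Bid]]]].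
  assert (GA : germ0 A tau (pw 3)) by (split; [lra|intros; apply Ag; auto]).
  assert (GB : germ1 B tau (pw 3)) by (split; [lra|intros; apply Bg; auto]).
  destruct (decomp A A' B B' HA HB GA GB Aid Bid f f' HF) as [k1 [m1 [h1 [h1' [HH1 [CS1 [Ef Ef']]]]]]].
  destruct (decomp A A' B B' HA HB GA GB Aid Bid k k' HK) as [k2 [m2 [h2 [h2' [HH2 [CS2 [Ek Ek']]]]]]].
  set (a1 := powf A A' k1) in *. set (b1 := powf B B' m1) in *.
  set (a2 := powf A A' k2) in *. set (b2 := powf B B' m2) in *.
  set (E1 := comp a1 b1) in *. set (E2 := comp a2 b2) in *.
  set (E1' := comp (powf B B' (- m1)) (powf A A' (- k1))) in *.
  set (E2' := comp (powf B B' (- m2)) (powf A A' (- k2))) in *.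
  assert (HE1 : FF E1 E1') by (apply FF_comp; apply powf_FF; auto).
  assert (HE2 : FF E2 E2') by (apply FF_comp; apply powf_FF; auto).
  pose proof HE1 as [_ [_ EI1]]. pose proof HE2 as [_ [_ EI2]].
  assert (Cab : forall kk mm, comp (powf A A' kk) (powf B B' mm) = comp (powf B B' mm) (powf A A' kk)).
  { intros kk mm. pose proof (powf_FF A A' kk HA) as [FA _]. pose proof (powf_FF B B' mm HB) as [FB _].
    apply (disj_comm _ _ (fun x => 0 < x < pw 2) (fun x => pw 1 < x < 1)).
    - apply powf_supp; auto. intros; apply Aid; lra.
    - apply powf_supp; auto. intros; apply Bid; lra.
    - intros; lra.
    - apply (maps_into (powf A A' kk) (fun x => 0 < x < pw 2)). apply powf_supp; auto. intros; apply Aid; lra. apply Fm_inj; auto.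
    - apply (maps_into (powf B B' mm) (fun x => pw 1 < x < 1)). apply powf_supp; auto. intros; apply Bid; lra. apply Fm_inj; auto. }
  assert (Caa := equal_f (powf_comm A A' k1 k2 HA)).
  assert (Cbb := equal_f (powf_comm B B' m1 m2 HB)).
  assert (C12 : forall z, E1 (E2 z) = E2 (E1 z)).
  { intros z. unfold E1, E2, Defs.comp. fold a1 b1 a2 b2.
    pose proof (equal_f (Cab k2 m1)) as X1. pose proof (equal_f (Cab k1 m2)) as X2.
    unfold Defs.comp in X1, X2, Caa, Cbb. fold a1 b1 a2 b2 in X1, X2, Caa, Cbb.
    rewrite <- X1. rewrite Caa. rewrite Cbb. rewrite X2. reflexivity. }
  assert (C12' : forall z, E1 (E2' z) = E2' (E1 z)).
  { intros z. rewrite <- (inv_l _ _ EI2 (E1 (E2' z))). rewrite <- C12. rewrite (inv_r _ _ EI2). auto. }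
  assert (N1 : N (cm h1 h1' k k')) by (apply (N_hf N g); auto).
  assert (N2 : N (cm h2 h2' E1 E1')) by (apply (N_hf N g); auto).
  assert (N2' : N (cm E1 E1' h2 h2')) by (apply (Ninv (cm h2 h2' E1 E1')); auto; apply cm_FF; auto).
  assert (NX : N (comp (comp E1' (comp (cm h1 h1' k k') E1)) (comp E2' (comp (cm E1 E1' h2 h2') E2)))).
  { apply Ncomp; apply N_normF; auto. }
  replace (cm f f' k k') with (comp (comp E1' (comp (cm h1 h1' k k') E1)) (comp E2' (comp (cm E1 E1' h2 h2') E2))); auto.
  rewrite Ef, Ef', Ek, Ek'. fold E1' E2'.
  apply functional_extensionality. intros z. unfold cm, Defs.comp. fold a1 b1 a2 b2.
  pose proof HH2 as [_ [_ HI2]].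
  rewrite C12'. rewrite (inv_r _ _ EI2). rewrite (inv_r _ _ EI1). rewrite (inv_r _ _ HI2). reflexivity.
Qed.

Theorem mainTheorem5 : Ftau'_simple.
Proof.
  split.
  - destruct elt_f0 as [F [F' [HF Fg]]]. destruct elt_a as [A [A' [HA [Ag Aid]]]].
    pose proof HF as [F1 [F2 FI]]. pose proof HA as [A1 [A2 AI]].
    pose proof pw_facts as [P4 [P43 [P32 [P21 [P1 [E1 [E2 [E3 _]]]]]]]].
    exists (cm F F' A A'). split.
    + apply comm_Fp. apply cm_is; auto; apply Fm_in_Ftau; auto.
    + intro E. pose proof (equal_f E (pw 2)) as H. unfold cm, Defs.comp, idR in H.
      apply (f_equal F) in H. rewrite (inv_r _ _ FI) in H.
      apply (f_equal A) in H. rewrite (inv_r _ _ AI) in H.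
      rewrite (Aid (pw 2)) in H by lra. rewrite Fg in H by lra.
      rewrite Ag in H. 2:{ split. pose proof tau_pos. nra. rewrite E3, E2 in *. lra. }
      pose proof tau_pos. pose proof tau_lt1. rewrite E2 in H. nra.
  - intros N HN. pose proof HN as [Nsub [Nid [Ncomp [Ninv Nconj]]]].
    destruct (classic (exists g, N g /\ g <> idR)) as [[g [Ng Hne]]|Hno].
    + right. intros h Hh. induction Hh. auto.
      apply Ncomp; auto.
      destruct (is_comm_cm c H) as [f [f' [k [k' [_ [_ [HF [HK ->]]]]]]]].
      apply (N_all N g); auto.
    + left. intros h Hh. apply NNPP. intro Hc. apply Hno. exists h. auto.
Qed.
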